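(* Let $e_1,e_2,e_3$ be the standard basis of $\mathbb{Z}^3$. Up to isomorphism, the toric varieties which are obtainable from $\mathbb{A}^3$ by a sequence of blow-ups along torus-invariant subvarieties and have ample anticanonical bundle are exactly: (1) $\mathbb{A}^3$; (2) the blow-up of $\mathbb{A}^3$ along a torus-invariant subvariety of codimension $2$; (3) the blow-up of $\mathbb{A}^3$ at the origin; (4) the toric variety whose fan has maximal cones $\mathrm{cone}(e_1,e_1+e_2,e_1+e_2+e_3)$, $\mathrm{cone}(e_1,e_3,e_1+e_2+e_3)$, $\mathrm{cone}(e_2,e_3,e_1+e_2+e_3)$, $\mathrm{cone}(e_2,e_1+e_2,e_1+e_2+e_3)$ (obtainable from $\mathbb{A}^3$ by two consecutive blow-ups along subvarieties of codimension two); (5) the toric variety whose fan has maximal cones $\mathrm{cone}(e_1,e_3,e_1+e_2+2e_3)$, $\mathrm{cone}(e_1,e_1+e_2+e_3,e_1+e_2+2e_3)$, $\mathrm{cone}(e_1,e_2,e_1+e_2+e_3)$, $\mathrm{cone}(e_2,e_1+e_2+e_3,e_1+e_2+2e_3)$, $\mathrm{cone}(e_2,e_3,e_1+e_2+2e_3)$ (obtainable from $\mathbb{A}^3$ by a blow-up at the origin followed by a blow-up along a codimension-two subvariety).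
   Context: $\mathbb{A}^3$ is the toric variety of $(\mathbb{C}^* )^3$ with fan $\mathrm{cone}(e_1,e_2,e_3)$ and its faces. Blow-ups along torus-invariant subvarieties (orbit closures) of smooth toric varieties are toric and correspond to star subdivisions of the corresponding cone at the sum of its primitive generators. *)

(* Defs.v *)
(* Combinatorial model of smooth toric 3-folds obtained
   from A^3 by torus-invariant blow-ups (star subdivisions). *)
From mathcomp Require Import all_boot all_order all_algebra.
Set Implicit Arguments. Unset Strict Implicit. Unset Printing Implicit Defensive.
Import Order.TTheory GRing.Theory Num.Theory.
Local Open Scope ring_scope.

Definition vec := 'rV[int]_3.
Definition mkv (x y z : int) : vec := \row_(i < 3) [:: x; y; z]`_i.
Definition e1 : vec := mkv 1 0 0.
Definition e2 : vec := mkv 0 1 0.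
Definition e3 : vec := mkv 0 0 1.

(* a smooth (simplicial) cone is given by its list of primitive ray generators;
   a fan is given by the list of its maximal cones (faces are implicit:
   the faces of a simplicial cone are spanned by subsets of its generators). *)
Definition cone := seq vec.
Definition fan := seq cone.

Definition A3 : fan := [:: [:: e1; e2; e3]].

Definition rays (F : fan) : seq vec := flatten F.

Definition is_face (F : fan) (T : cone) : Prop :=
  [/\ T != [::], uniq T & exists2 s, s \in F & {subset T <= s}].

Definition star (F : fan) (T : cone) : fan :=
  let v := \sum_(t <- T) t in
  flatten [seq if all (fun t => t \in s) T
               then [seq v :: [seq u <- s | u != t] | t <- T]
               else [:: s] | s <- F].

Inductive reachable : fan -> Prop :=
| reach_A3 : reachable A3
| reach_star F T : reachable F -> is_face F T -> reachable (star F T).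

Definition dot (m u : vec) : int := \sum_(i < 3) m 0 i * u 0 i.

(* -K = sum of all torus-invariant prime divisors is ample: its support
   function (with m_s in M = Z^3, <m_s,u_rho> = -1 for rho in s) is strictly
   convex: <m_s,u_rho> > -1 for every ray rho not in s (CLS, Lemma 6.1.5,
   Thm 6.1.14 / 7.2.? for fans with convex full-dimensional support). *)
Definition anticanonical_ample (F : fan) : Prop :=
  forall s, s \in F -> exists m : vec,
    (forall u, u \in s -> dot m u = -1) /\
    (forall u, u \in rays F -> u \notin s -> -1 < dot m u).

Definition fan_eq (F G : fan) : Prop :=
  (forall s, s \in F -> exists2 t, t \in G & s =i t) /\
  (forall t, t \in G -> exists2 s, s \in F & s =i t).

(* isomorphism of toric varieties = lattice automorphism of N carrying
   one fan onto the other *)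
Definition fan_iso (F G : fan) : Prop :=
  exists2 A : 'M[int]_3, A \in unitmx &
    fan_eq (map (map (fun u : vec => u *m A)) F) G.

Definition fan1 : fan := A3.
Definition fan2 : fan := star A3 [:: e1; e2].
Definition fan3 : fan := star A3 [:: e1; e2; e3].
Definition fan4 : fan :=
  [:: [:: e1; mkv 1 1 0; mkv 1 1 1];
      [:: e1; e3; mkv 1 1 1];
      [:: e2; e3; mkv 1 1 1];
      [:: e2; mkv 1 1 0; mkv 1 1 1]].
Definition fan5 : fan :=
  [:: [:: e1; e3; mkv 1 1 2];
      [:: e1; mkv 1 1 1; mkv 1 1 2];
      [:: e1; e2; mkv 1 1 1];
      [:: e2; mkv 1 1 1; mkv 1 1 2];
      [:: e2; e3; mkv 1 1 2]].

(* Main.v *)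
Require Import Defs.
From mathcomp Require Import all_boot all_order all_algebra.
From mathcomp Require Import fingroup perm.
From mathcomp Require Import zify ring lra.
Set Implicit Arguments. Unset Strict Implicit. Unset Printing Implicit Defensive.
Import Order.TTheory GRing.Theory Num.Theory.
Local Open Scope ring_scope.

Definition i0 : 'I_3 := @Ordinal 3 0 isT.
Definition i1 : 'I_3 := @Ordinal 3 1 isT.
Definition i2 : 'I_3 := @Ordinal 3 2 isT.
Definition co (i : 'I_3) (u : vec) : int := u ord0 i.

Lemma ord3P (P : 'I_3 -> Prop) : P i0 -> P i1 -> P i2 -> forall i, P i.
Proof.
move=> H0 H1 H2 [[|[|[|k]]] Hk] //.
- by have -> : Ordinal Hk = i0 by apply: val_inj.
- by have -> : Ordinal Hk = i1 by apply: val_inj.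
- by have -> : Ordinal Hk = i2 by apply: val_inj.
Qed.

Lemma vecP (u w : vec) : co i0 u = co i0 w -> co i1 u = co i1 w -> co i2 u = co i2 w -> u = w.
Proof.
move=> H0 H1 H2; apply/rowP; apply: ord3P => //.
Qed.

Lemma mkvE x y z : [/\ co i0 (mkv x y z) = x, co i1 (mkv x y z) = y & co i2 (mkv x y z) = z].
Proof. by rewrite /co /mkv !mxE. Qed.

Lemma coD i (u w : vec) : co i (u + w) = co i u + co i w.
Proof. by rewrite /co mxE. Qed.
Lemma coN i (u : vec) : co i (- u) = - co i u.
Proof. by rewrite /co mxE. Qed.
Lemma coMn i (u : vec) n : co i (u *+ n) = co i u *+ n.
Proof. by rewrite /co mulmxnE. Qed.
Lemma co0 i : co i (0 : vec) = 0.
Proof. by rewrite /co mxE. Qed.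

Lemma sum_ord3 (f : 'I_3 -> int) : \sum_(i < 3) f i = f i0 + f i1 + f i2.
Proof.
rewrite !big_ord_recl big_ord0 addr0 addrA.
by congr (_ + _ + _); congr f; apply: val_inj.
Qed.

Lemma dotE (m u : vec) : dot m u = co i0 m * co i0 u + co i1 m * co i1 u + co i2 m * co i2 u.
Proof. by rewrite /dot sum_ord3. Qed.

Definition v3 := (int * int * int)%type.
Definition fanT := seq (seq v3).
Definition toV (p : v3) : vec := mkv p.1.1 p.1.2 p.2.
Definition toF (F : fanT) : fan := map (map toV) F.

Lemma toV_inj : injective toV.
Proof.
move=> [[a b] c] [[a' b'] c'] H.
have := congr1 (co i0) H; have := congr1 (co i1) H; have := congr1 (co i2) H.
rewrite /toV /=; case: (mkvE a b c) => -> -> ->; case: (mkvE a' b' c') => -> -> ->.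
by move=> -> -> ->.
Qed.

Definition add3 (a b : v3) : v3 := (a.1.1 + b.1.1, a.1.2 + b.1.2, a.2 + b.2).
Definition sum3 (T : seq v3) : v3 := foldr add3 (0,0,0) T.
Definition star3 (F : fanT) (T : seq v3) : fanT :=
  let v := sum3 T in
  flatten [seq if all (fun t => t \in s) T
               then [seq v :: [seq u <- s | u != t] | t <- T]
               else [:: s] | s <- F].

Lemma coV0 (p : v3) : co i0 (toV p) = p.1.1. Proof. by case: (mkvE p.1.1 p.1.2 p.2). Qed.
Lemma coV1 (p : v3) : co i1 (toV p) = p.1.2. Proof. by case: (mkvE p.1.1 p.1.2 p.2). Qed.
Lemma coV2 (p : v3) : co i2 (toV p) = p.2. Proof. by case: (mkvE p.1.1 p.1.2 p.2). Qed.

Lemma toV_add a b : toV (add3 a b) = toV a + toV b.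
Proof. by apply: vecP; rewrite coD !(coV0, coV1, coV2). Qed.
Lemma toV_zero : toV (0,0,0) = 0.
Proof. by apply: vecP; rewrite co0 !(coV0, coV1, coV2). Qed.

Lemma toV_sum T : \sum_(t <- map toV T) t = toV (sum3 T).
Proof.
elim: T => [|a T IH]; first by rewrite big_nil toV_zero.
by rewrite /= big_cons IH toV_add.
Qed.

Lemma mem_toV (x : v3) (s : seq v3) : (toV x \in map toV s) = (x \in s).
Proof. by rewrite mem_map //; apply: toV_inj. Qed.

Lemma star_toF F T : star (toF F) (map toV T) = toF (star3 F T).
Proof.
rewrite /star /star3 /toF toV_sum map_flatten -!map_comp; congr flatten.
apply: eq_map => s /=.
rewrite all_map; under eq_all do rewrite /= mem_toV.
case: ifP => _ //=.
rewrite -!map_comp; apply: eq_map => t /=; congr (_ :: _).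
rewrite filter_map; congr map; apply: eq_filter => u /=.
by rewrite inj_eq //; apply: toV_inj.
Qed.
Lemma fan_eq_refl F : fan_eq F F.
Proof. by split=> s sF; exists s. Qed.
Lemma fan_eq_sym F G : fan_eq F G -> fan_eq G F.
Proof.
case=> H1 H2; split=> s sF.
- by case: (H2 s sF) => t tF e; exists t => // x; rewrite e.
- by case: (H1 s sF) => t tF e; exists t => // x; rewrite e.
Qed.
Lemma fan_eq_trans F G H : fan_eq F G -> fan_eq G H -> fan_eq F H.
Proof.
case=> A1 A2 [B1 B2]; split=> s sF.
- case: (A1 s sF) => t tG e; case: (B1 t tG) => w wH e'.
  by exists w => // x; rewrite e e'.
- case: (B2 s sF) => t tG e; case: (A2 t tG) => w wF e'.
  by exists w => // x; rewrite e' e.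
Qed.

Lemma raysP (F : fan) u : reflect (exists2 s, s \in F & u \in s) (u \in rays F).
Proof. exact: flattenP. Qed.

Lemma fan_eq_rays F G : fan_eq F G -> rays F =i rays G.
Proof.
case=> H1 H2 u; apply/raysP/raysP => -[s sF us].
- by case: (H1 s sF) => t tG e; exists t; rewrite // -e.
- by case: (H2 s sF) => t tG e; exists t; rewrite // e.
Qed.

Lemma starP (F : fan) T s : reflect
  (exists2 s1, s1 \in F &
     (~~ all (fun t => t \in s1) T /\ s = s1) \/
     (all (fun t => t \in s1) T /\
       exists2 t, t \in T & s = (\sum_(t <- T) t) :: [seq u <- s1 | u != t]))
  (s \in star F T).
Proof.
apply: (iffP flattenP).
- move=> [l /mapP [s1 s1F ->]]; case: ifP => a.
  + by move=> /mapP [t tT ->]; exists s1 => //; right; split => //; exists t.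
  + by rewrite inE => /eqP ->; exists s1 => //; left; rewrite a.
- move=> [s1 s1F [[/negbTE a ->]|[a [t tT ->]]]].
  + exists [:: s1]; last by rewrite inE.
    by apply/mapP; exists s1 => //; case: ifP => // h; rewrite h in a.
  + exists [seq (\sum_(t <- T) t) :: [seq u <- s1 | u != t0] | t0 <- T]; last by apply: map_f.
    by apply/mapP; exists s1 => //; case: ifP => // h; rewrite a in h.
Qed.

Lemma filter_eqi (s s' : seq vec) (t : vec) : s =i s' ->
  [seq u <- s | u != t] =i [seq u <- s' | u != t].
Proof. by move=> e x; rewrite !mem_filter e. Qed.

Lemma star_feq F F' T : fan_eq F F' -> fan_eq (star F T) (star F' T).
Proof.
have key : forall F F' : fan, (forall s : cone, s \in F -> exists2 t, t \in F' & s =i t) ->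
  forall s, s \in star F T -> exists2 t, t \in star F' T & s =i t.
  move=> {}F {}F' H s /starP [s1 s1F H1]; case: (H s1 s1F) => s1' s1'F e.
  have ea : all (fun t => t \in s1) T = all (fun t => t \in s1') T.
    by apply: eq_all => x; rewrite e.
  case: H1 => [[a ->]|[a [t tT ->]]].
  + by exists s1' => //; apply/starP; exists s1' => //; left; rewrite -ea.
  + exists ((\sum_(t <- T) t) :: [seq u <- s1' | u != t]).
      by apply/starP; exists s1' => //; right; split; [rewrite -ea|exists t].
    by move=> x; rewrite !inE (filter_eqi t e).
case=> H1 H2; split; first exact: key.
move=> s sF; have H2' : forall s, s \in F' -> exists2 t, t \in F & s =i t.
  by move=> s0 s0F; case: (H2 s0 s0F) => t tF e; exists t => // x; rewrite e.
by case: (key F' F H2' s sF) => t tF e; exists t => // x; rewrite e.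
Qed.

Lemma star_Teq F T T' : uniq T -> uniq T' -> T =i T' -> fan_eq (star F T) (star F T').
Proof.
move=> uT uT' e; have p : perm_eq T T' by apply: uniq_perm.
have sv : \sum_(t <- T) t = \sum_(t <- T') t by apply: perm_big.
have ea : forall s1 : cone, all (fun t => t \in s1) T = all (fun t => t \in s1) T'.
  by move=> s1; apply: eq_all_r.
split=> s /starP [s1 s1F [[a ->]|[a [t tT ->]]]].
- by exists s1 => //; apply/starP; exists s1 => //; left; rewrite -ea.
- exists (\sum_(t <- T') t :: [seq u <- s1 | u != t]); last by rewrite sv.
  by apply/starP; exists s1 => //; right; split; [rewrite -ea|exists t; rewrite -?e].
- by exists s1 => //; apply/starP; exists s1 => //; left; rewrite ea.
- exists (\sum_(t <- T) t :: [seq u <- s1 | u != t]); last by rewrite sv.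
  by apply/starP; exists s1 => //; right; split; [rewrite ea|exists t; rewrite ?e].
Qed.

Lemma rays_star F T : is_face F T -> {subset rays F <= rays (star F T)}.
Proof.
case=> Tn uT _ u /raysP [s1 s1F us1].
case: (boolP (all (fun t => t \in s1) T)) => a; last first.
  by apply/raysP; exists s1 => //; apply/starP; exists s1 => //; left.
have mk : forall t, t \in T -> u != t ->
    u \in rays (star F T).
  move=> t tT ut; apply/raysP.
  exists (\sum_(t <- T) t :: [seq x <- s1 | x != t]).
    by apply/starP; exists s1 => //; right; split => //; exists t.
  by rewrite inE mem_filter ut us1 orbT.
case: T Tn uT a mk => [//|t0 T'] _ uT a mk.
case: (eqVneq u t0) => [ut0|]; last by apply: mk; rewrite inE eqxx.
case: (boolP (has (fun t => u != t) T')) => [/hasP [t tT ut]|].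
  by apply: (mk t) => //; rewrite inE tT orbT.
move=> /hasPn hn.
have T'0 : T' = [::].
  case: T' uT hn {a mk} => [//|t1 T''] /= /andP [nin _] hn.
  have := hn t1; rewrite inE eqxx /= => /(_ isT) /negPn /eqP ut1.
  by move: nin; rewrite inE -ut1 -ut0 eqxx.
subst T'; apply/raysP; exists (\sum_(t <- [:: t0]) t :: [seq x <- s1 | x != t0]).
  by apply/starP; exists s1 => //; right; split => //; exists t0; rewrite ?inE.
by rewrite big_seq1 inE ut0 eqxx.
Qed.

Definition det3 (a b c : vec) : int :=
  co i0 a * (co i1 b * co i2 c - co i2 b * co i1 c)
  - co i1 a * (co i0 b * co i2 c - co i2 b * co i0 c)
  + co i2 a * (co i0 b * co i1 c - co i1 b * co i0 c).
Definition csum (u : vec) : int := co i0 u + co i1 u + co i2 u.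

Definition Good (F : fan) : Prop :=
  [/\ (forall s, s \in F -> exists a b c, s = [:: a; b; c] /\ det3 a b c != 0),
      (forall u, u \in rays F -> [/\ 0 <= co i0 u, 0 <= co i1 u, 0 <= co i2 u & 0 < csum u]) &
      [/\ e1 \in rays F, e2 \in rays F & e3 \in rays F]].

Lemma co_sum i (T : seq vec) : co i (\sum_(t <- T) t) = \sum_(t <- T) co i t.
Proof.
elim: T => [|a T IH]; first by rewrite !big_nil co0.
by rewrite !big_cons coD IH.
Qed.

Lemma det3_uniq a b c : det3 a b c != 0 -> uniq [:: a; b; c].
Proof.
move=> d.
have ab : a != b.
  by apply/eqP => ab; move: d; rewrite ab /det3; apply/negP; rewrite negbK; apply/eqP; ring.
have ac : a != c.
  by apply/eqP => ac; move: d; rewrite ac /det3; apply/negP; rewrite negbK; apply/eqP; ring.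
have bc : b != c.
  by apply/eqP => bc; move: d; rewrite bc /det3; apply/negP; rewrite negbK; apply/eqP; ring.
by rewrite /= !inE negb_or ab ac bc.
Qed.

Lemma sum_sub3 (a b c : vec) (T : seq vec) : uniq [:: a; b; c] -> uniq T ->
  {subset T <= [:: a; b; c]} ->
  \sum_(t <- T) t = a *+ (a \in T) + b *+ (b \in T) + c *+ (c \in T).
Proof.
move=> us uT sT.
have p : perm_eq T [seq x <- [:: a; b; c] | x \in T].
  apply: uniq_perm => //; first by apply: filter_uniq.
  by move=> x; rewrite mem_filter; case xT: (x \in T) => //=; rewrite sT.
rewrite (perm_big _ p) big_filter big_mkcond !big_cons big_nil ?addr0 ?addrA.
change ((if a \in T then a else 0) + ((if b \in T then b else 0) + ((if c \in T then c else 0) + 0)) = a *+ (a \in T) + b *+ (b \in T) + c *+ (c \in T)).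
by case: (a \in T); case: (b \in T); case: (c \in T); rewrite /= ?mulr1n ?mulr0n ?addr0 ?add0r ?addrA.
Qed.

Lemma Good_A3 : Good A3.
Proof.
split.
- move=> s; rewrite inE => /eqP ->; exists e1, e2, e3; split => //.
  by rewrite /det3 /e1 /e2 /e3; case: (mkvE 1 0 0) => -> -> ->;
     case: (mkvE 0 1 0) => -> -> ->; case: (mkvE 0 0 1) => -> -> ->.
- move=> u /raysP [s]; rewrite inE => /eqP -> ; rewrite !inE => /or3P [] /eqP ->;
  rewrite /csum /e1 /e2 /e3 ?(mkvE 1 0 0, mkvE 0 1 0, mkvE 0 0 1).
  + by case: (mkvE 1 0 0) => -> -> ->.
  + by case: (mkvE 0 1 0) => -> -> ->.
  + by case: (mkvE 0 0 1) => -> -> ->.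
- by split; apply/raysP; exists [:: e1; e2; e3]; rewrite ?inE ?eqxx ?orbT.
Qed.

Lemma csum_sum (T : seq vec) : csum (\sum_(t <- T) t) = \sum_(t <- T) csum t.
Proof. by rewrite /csum !co_sum -!big_split. Qed.

Lemma Good_star F T : Good F -> is_face F T -> Good (star F T).
Proof.
move=> [G1 G2 [E1 E2 E3]] fT; have rs := rays_star fT.
case: fT => Tn uT _.
split; last by split; apply: rs.
- move=> s /starP [s1 s1F [[_ ->]|[a [t tT ->]]]]; first exact: G1.
  case: (G1 s1 s1F) => x [y [z [def d]]]; subst s1.
  have us := det3_uniq d.
  have sT : {subset T <= [:: x; y; z]} by move=> w wT; apply: (allP a).
  rewrite (sum_sub3 us uT sT).
  move: us; rewrite /= !inE negb_or => /and3P [/andP [xy xz] yz _].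
  have : t \in [:: x; y; z] by apply: sT.
  rewrite !inE => /or3P [] /eqP tE; subst t.
  + exists (x *+ (x \in T) + y *+ (y \in T) + z *+ (z \in T)), y, z.
    rewrite eqxx eq_sym xy eq_sym xz; split => //.
    have -> : det3 (x *+ (x \in T) + y *+ (y \in T) + z *+ (z \in T)) y z = det3 x y z.
      by rewrite tT; case: (y \in T); case: (z \in T);
         rewrite /det3 !coD !coMn ?mulr1n ?mulr0n; ring.
    by [].
  + exists (x *+ (x \in T) + y *+ (y \in T) + z *+ (z \in T)), x, z.
    rewrite eqxx xy eq_sym yz; split => //.
    have -> : det3 (x *+ (x \in T) + y *+ (y \in T) + z *+ (z \in T)) x z = - det3 x y z.
      by rewrite tT; case: (x \in T); case: (z \in T);
         rewrite /det3 !coD !coMn ?mulr1n ?mulr0n; ring.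
    by rewrite oppr_eq0.
  + exists (x *+ (x \in T) + y *+ (y \in T) + z *+ (z \in T)), x, y.
    rewrite eqxx xz yz; split => //.
    have -> : det3 (x *+ (x \in T) + y *+ (y \in T) + z *+ (z \in T)) x y = det3 x y z.
      by rewrite tT; case: (x \in T); case: (y \in T);
         rewrite /det3 !coD !coMn ?mulr1n ?mulr0n; ring.
    by [].
- move=> u /raysP [s /starP [s1 s1F [[_ ->]|[a [t tT ->]]]]] us.
    by apply: G2; apply/raysP; exists s1.
  move: us; rewrite inE mem_filter => /orP [/eqP ->|/andP [_ us1]]; last first.
    by apply: G2; apply/raysP; exists s1.
  have TG : forall w, w \in T -> [/\ 0 <= co i0 w, 0 <= co i1 w, 0 <= co i2 w & 0 < csum w].
    by move=> w wT; apply: G2; apply/raysP; exists s1 => //; apply: (allP a).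
  rewrite !co_sum csum_sum; split.
  + by rewrite big_seq sumr_ge0 // => w /TG [].
  + by rewrite big_seq sumr_ge0 // => w /TG [].
  + by rewrite big_seq sumr_ge0 // => w /TG [].
  + case: T Tn uT a tT TG {rs} => [//|t0 T'] _ _ _ _ TG.
    rewrite big_cons; have [_ _ _ h1] := TG t0 (mem_head _ _).
    have h2 : 0 <= \sum_(j <- T') csum j.
      rewrite big_seq sumr_ge0 // => w wT.
      have wT' : w \in t0 :: T' by rewrite inE wT orbT.
      by have [? ? ? ?] := TG w wT'; apply: ltW.
    by apply: (lt_le_trans h1); rewrite lerDl.
Qed.

Definition ObsA (F : fan) : Prop :=
  exists2 s, s \in F & [&& e1 \notin s, e2 \notin s & e3 \notin s].
Definition ObsB (F : fan) : Prop := exists u x y,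
  [/\ u \in rays F, x \in rays F, y \in rays F, x != y & x + y = u *+ 2].
Definition ObsC (F : fan) : Prop := exists u x y,
  [/\ u \in rays F, x \in rays F, y \in rays F & x + y = u *+ 3].
Definition Obs F := ObsA F \/ ObsB F \/ ObsC F.

Lemma Obs_feq F G : fan_eq F G -> Obs F -> Obs G.
Proof.
move=> fe; have r := fan_eq_rays fe; case: fe => H1 _.
case=> [[s sF ns]|[[u [x [y [ur xr yr xy e]]]]|[u [x [y [ur xr yr e]]]]]].
- left; case: (H1 s sF) => t tG st; exists t => //.
  by rewrite -!st.
- by right; left; exists u, x, y; rewrite -!r.
- by right; right; exists u, x, y; rewrite -!r.
Qed.

Lemma csum_e : [/\ csum e1 = 1, csum e2 = 1 & csum e3 = 1].
Proof.
rewrite /csum /e1 /e2 /e3; case: (mkvE 1 0 0) => -> -> ->;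
case: (mkvE 0 1 0) => -> -> ->; case: (mkvE 0 0 1) => -> -> ->.
by split.
Qed.

Lemma v_not_e F T s e : Good F -> s \in F -> T != [::] -> uniq T ->
  {subset T <= s} -> e \notin s -> csum e = 1 -> \sum_(t <- T) t != e.
Proof.
move=> [_ G2 _] sF Tn uT sT es ce.
have pos : forall w, w \in T -> 0 < csum w.
  move=> w wT; have wr : w \in rays F by apply/raysP; exists s => //; apply: sT.
  by case: (G2 w wr).
case: T Tn uT sT pos => [//|t0 T''] _ uT sT pos.
case: T'' uT sT pos => [|t1 T'] uT sT pos.
- rewrite big_seq1; apply: contraNneq es => <-; apply: sT; exact: mem_head.
- apply/eqP => E; have := congr1 csum E; rewrite ce csum_sum !big_cons.
  have h0 := pos t0 (mem_head _ _).
  have h1 : 0 < csum t1 by apply: pos; rewrite !inE eqxx orbT.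
  have h2 : 0 <= \sum_(j <- T') csum j.
    rewrite big_seq sumr_ge0 // => w wT; apply: ltW; apply: pos.
    by rewrite !inE wT !orbT.
  move: h0 h1 h2; set a := csum t0; set b := csum t1; set c := \sum_(j <- T') _.
  move=> h0 h1 h2 h3; move: h0 h1 h2 h3; clear; lia.
Qed.

Lemma Obs_star F T : Good F -> is_face F T -> Obs F -> Obs (star F T).
Proof.
move=> gF fT; have rs := rays_star fT; case: (fT) => Tn uT _.
case=> [[s sF ns]|[[u [x [y [ur xr yr xy e]]]]|[u [x [y [ur xr yr e]]]]]].
- left; case: (boolP (all (fun t => t \in s) T)) => a; last first.
    by exists s => //; apply/starP; exists s => //; left.
  case: T Tn uT a fT rs => [//|t0 T'] Tn uT a fT rs.
  exists (\sum_(t <- t0 :: T') t :: [seq w <- s | w != t0]).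
    by apply/starP; exists s => //; right; split => //; exists t0; rewrite ?inE ?eqxx.
  have sT : {subset t0 :: T' <= s} by move=> w wT; apply: (allP a).
  case/and3P: ns => n1 n2 n3; case: csum_e => c1 c2 c3.
  rewrite !inE !mem_filter (negbTE n1) (negbTE n2) (negbTE n3) !andbF !orbF.
  by rewrite !(eq_sym _ (\sum_(t <- _) t)) !(negbTE (v_not_e gF sF Tn uT sT _ _)).
- by right; left; exists u, x, y; split => //; apply: rs.
- by right; right; exists u, x, y; split => //; apply: rs.
Qed.

Lemma dotD m x y : dot m (x + y) = dot m x + dot m y.
Proof. by rewrite !dotE !coD; ring. Qed.
Lemma dotMn m x n : dot m (x *+ n) = dot m x *+ n.
Proof.
elim: n => [|n IH]; first by rewrite !mulr0n dotE !co0 !mulr0 !addr0.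
by rewrite !mulrS dotD IH.
Qed.

Lemma ample_cone F u : anticanonical_ample F -> u \in rays F ->
  exists s, exists m, [/\ s \in F, u \in s, (forall g, g \in s -> dot m g = -1) &
     (forall w, w \in rays F -> -1 <= dot m w /\ (dot m w = -1 -> w \in s))].
Proof.
move=> A /raysP [s sF us]; case: (A s sF) => m [H1 H2].
exists s, m; split => // w wr; case: (boolP (w \in s)) => ws.
  by rewrite H1.
have := H2 w wr ws => h; split; first exact: ltW.
by move=> e; move: h; rewrite e ltxx.
Qed.

Lemma dep3 a b c u x y : u \in [:: a; b; c] -> x \in [:: a; b; c] -> y \in [:: a; b; c] ->
  x != y -> x != u -> y != u -> x + y = u *+ 2 -> det3 a b c = 0.
Proof.
move=> uI xI yI xy xu yu e.
have hy : forall i, co i y = co i u + co i u - co i x.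
  move=> i; have := congr1 (co i) e; rewrite mulr2n !coD => <-; ring.
move: uI xI yI; rewrite !inE => /or3P [] /eqP ? /or3P [] /eqP ? /or3P [] /eqP ?; subst;
  rewrite ?eqxx in xy xu yu => //;
  by rewrite /det3 !hy; ring.
Qed.

Lemma Obs_nonample F : Good F -> Obs F -> ~ anticanonical_ample F.
Proof.
move=> [G1 G2 [E1 E2 E3]] O A.
case: O => [[s sF ns]|[[u [x [y [ur xr yr xy e]]]]|[u [x [y [ur xr yr e]]]]]].
- case: (G1 s sF) => a [b [c [def _]]].
  case: (A s sF) => m [H1 H2].
  have ar : a \in rays F by apply/raysP; exists s; rewrite // def inE eqxx.
  case: (G2 a ar) => a0 a1 a2 _.
  case/and3P: ns => n1 n2 n3.
  have h1 := H2 e1 E1 n1; have h2 := H2 e2 E2 n2; have h3 := H2 e3 E3 n3.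
  move: h1 h2 h3; rewrite !dotE /e1 /e2 /e3; case: (mkvE 1 0 0) => -> -> ->;
  case: (mkvE 0 1 0) => -> -> ->; case: (mkvE 0 0 1) => -> -> ->.
  rewrite !mulr0 !mulr1 !addr0 !add0r => h1 h2 h3.
  have : dot m a = -1 by apply: H1; rewrite def inE eqxx.
  rewrite dotE; move: h1 h2 h3 a0 a1 a2.
  set p := co i0 m; set q := co i1 m; set r := co i2 m.
  set x := co i0 a; set y := co i1 a; set z := co i2 a.
  move=> h1 h2 h3 a0 a1 a2 E.
  have : 0 <= p * x + q * y + r * z.
    by rewrite !addr_ge0 // mulr_ge0 //; lia.
  by rewrite E.
- case: (ample_cone A ur) => s [m [sF us H1 H2]].
  have hu := H1 u us.
  have := congr1 (dot m) e; rewrite dotD dotMn hu.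
  case: (H2 x xr) => hx hx'; case: (H2 y yr) => hy hy' E.
  have ex : dot m x = -1 by move: hx hy E; clear; lia.
  have ey : dot m y = -1 by move: hx hy E; clear; lia.
  have xs := hx' ex; have ys := hy' ey.
  case: (G1 s sF) => a [b [c [def d]]]; rewrite def in us xs ys.
  have xu : x != u.
    apply/eqP => xu; move: e; rewrite xu mulr2n => /addrI ye.
    by move: xy; rewrite xu ye eqxx.
  have yu : y != u.
    apply/eqP => yu; move: e; rewrite yu mulr2n => /addIr xe.
    by move: xy; rewrite xe yu eqxx.
  by move: d; rewrite (dep3 us xs ys xy xu yu e) eqxx.
- case: (ample_cone A ur) => s [m [sF us H1 H2]].
  have hu := H1 u us.
  have := congr1 (dot m) e; rewrite dotD dotMn hu.
  case: (H2 x xr) => hx _; case: (H2 y yr) => hy _ E.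
  by move: hx hy E; clear; lia.
Qed.

Definition scln (n : nat) (a : v3) : v3 := (a.1.1 *+ n, a.1.2 *+ n, a.2 *+ n).
Definition obs3 (F : fanT) : bool :=
  has (fun s => [&& (1,0,0) \notin s, (0,1,0) \notin s & (0,0,1) \notin s]) F ||
  let R := undup (flatten F) in
  has (fun u => has (fun x => has (fun y =>
     ((x != y) && (add3 x y == scln 2 u)) || (add3 x y == scln 3 u)) R) R) R.
Definition seteq3 (s t : seq v3) := all (fun x => x \in t) s && all (fun x => x \in s) t.
Definition fan_eq3 (F G : fanT) :=
  all (fun s => has (seteq3 s) G) F && all (fun t => has (fun s => seteq3 s t) F) G.
Definition masks7 : seq (seq bool) :=
  [:: [:: true; false; false]; [:: false; true; false]; [:: false; false; true];
      [:: true; true; false]; [:: true; false; true]; [:: false; true; true];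
      [:: true; true; true]].
Definition results (L : seq fanT) : seq fanT :=
  flatten [seq flatten [seq [seq star3 F0 (mask bs s0) | bs <- masks7] | s0 <- F0] | F0 <- L].
Definition closed_check (L : seq fanT) (H : seq nat) : bool :=
  all2 (fun G h => ((h < size L)%N && fan_eq3 G (nth [::] L h)) || obs3 G) (results L) H.
Definition shape_check (L : seq fanT) : bool :=
  all (all (fun s => (size s == 3)%N && uniq s)) L.

Lemma rays_toF F : rays (toF F) = map toV (flatten F).
Proof. by rewrite /rays /toF map_flatten. Qed.

Lemma toV_scln n a : toV (scln n a) = toV a *+ n.
Proof. by apply: vecP; rewrite coMn !(coV0, coV1, coV2). Qed.

Lemma obs3_sound F : obs3 F -> Obs (toF F).
Proof.
case/orP => [/hasP [s sF /and3P [n1 n2 n3]]|/hasP [u uR /hasP [x xR /hasP [y yR]]]].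
- left; exists (map toV s); first by apply: map_f.
  by rewrite -[e1]/(toV (1,0,0)) -[e2]/(toV (0,1,0)) -[e3]/(toV (0,0,1)) !mem_toV n1 n2 n3.
- have rr : forall z, z \in undup (flatten F) -> toV z \in rays (toF F).
    by move=> z; rewrite mem_undup rays_toF mem_toV.
  case/orP => [/andP [xy /eqP e]|/eqP e].
  + right; left; exists (toV u), (toV x), (toV y); split; try by apply: rr.
      by rewrite (inj_eq toV_inj).
    by rewrite -toV_add e toV_scln.
  + right; right; exists (toV u), (toV x), (toV y); split; try by apply: rr.
    by rewrite -toV_add e toV_scln.
Qed.

Lemma seteq3_sound s t : seteq3 s t -> map toV s =i map toV t.
Proof.
case/andP => /allP h1 /allP h2 x; apply/mapP/mapP => -[y ys ->]; exists y => //.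
- exact: h1.
- exact: h2.
Qed.

Lemma fan_eq3_sound F G : fan_eq3 F G -> fan_eq (toF F) (toF G).
Proof.
case/andP => /allP h1 /allP h2; split => s /mapP [s0 s0F ->].
- case/hasP: (h1 s0 s0F) => t tG e; exists (map toV t); first exact: map_f.
  exact: seteq3_sound.
- case/hasP: (h2 s0 s0F) => t tG e; exists (map toV t); first exact: map_f.
  exact: seteq3_sound.
Qed.

Lemma all2_all (A : eqType) (B : Type) (P : A -> B -> bool) (s : seq A) (t : seq B) :
  all2 P s t -> forall x, x \in s -> exists y, P x y.
Proof.
elim: s t => [|a s IH] [|b t] //= /andP [pab rest] x; rewrite inE => /orP [/eqP ->|xs].
- by exists b.
- exact: (IH t rest).
Qed.

Lemma closed_sound L H : closed_check L H ->
  forall F0 s0 bs, F0 \in L -> s0 \in F0 -> bs \in masks7 ->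
  (exists2 F1, F1 \in L & fan_eq3 (star3 F0 (mask bs s0)) F1) \/ obs3 (star3 F0 (mask bs s0)).
Proof.
move=> /all2_all C F0 s0 bs F0L s0F bsm.
have : star3 F0 (mask bs s0) \in results L.
  apply/flattenP; exists (flatten [seq [seq star3 F0 (mask bs s0) | bs <- masks7] | s0 <- F0]).
    by apply/mapP; exists F0.
  apply/flattenP; exists [seq star3 F0 (mask bs s0) | bs <- masks7].
    by apply/mapP; exists s0.
  by apply/mapP; exists bs.
move=> /C [h /orP [/andP [hl fe]|o]]; last by right.
by left; exists (nth [::] L h) => //; apply: mem_nth.
Qed.

Lemma masks7_mem (bs : seq bool) : size bs = 3%N -> has id bs -> bs \in masks7.
Proof. by case: bs => [|a [|b [|c [|]]]] //= _; case: a; case: b; case: c. Qed.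

Lemma inv_main L H : closed_check L H -> shape_check L ->
  (exists2 F0, F0 \in L & fan_eq A3 (toF F0)) ->
  forall F, reachable F -> Good F /\ ((exists2 F0, F0 \in L & fan_eq F (toF F0)) \/ Obs F).
Proof.
move=> C S B F rF; elim: rF => [|{}F T rF [gF IH] fT].
  by split; [exact: Good_A3 | left].
split; first exact: Good_star.
case: IH => [[F0 F0L fe]|O]; last by right; apply: Obs_star.
case: (fT) => Tn uT [s sF sT].
case: (fe) => fe1 _.
case: (fe1 s sF) => s' s'F es.
case/mapP: s'F => s0 s0F s'E; subst s'.
have /andP [sz us0] : (size s0 == 3)%N && uniq s0 by apply: (allP (allP S F0 F0L)).
set T0 := [seq x <- s0 | toV x \in T].
have eT : T =i map toV T0.
  move=> x; apply/idP/mapP.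
  - move=> xT; have : x \in map toV s0 by rewrite -es; apply: sT.
    by case/mapP => y ys xE; exists y => //; rewrite mem_filter -xE xT.
  - by case=> y; rewrite mem_filter => /andP [yT _] ->.
have uT0 : uniq (map toV T0) by rewrite (map_inj_uniq toV_inj) filter_uniq.
have bsm : [seq toV x \in T | x <- s0] \in masks7.
  apply: masks7_mem; first by rewrite size_map; apply/eqP.
  clear eT uT0; case: T Tn uT sT {fT T0} => [//|t0 T'] _ _ sT.
  have : t0 \in map toV s0 by rewrite -es; apply: sT; rewrite mem_head.
  case/mapP => y ys ye; apply/hasP; exists (toV y \in t0 :: T'); last by rewrite /= -ye mem_head.
  by apply/mapP; exists y.
have T0E : T0 = mask [seq toV x \in T | x <- s0] s0 by rewrite /T0 filter_mask.
have E1 : fan_eq (star F T) (toF (star3 F0 T0)).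
  apply: fan_eq_trans (star_feq T fe) _.
  by rewrite -star_toF; apply: star_Teq.
case: (closed_sound C F0L s0F bsm); rewrite -T0E.
- by move=> [F1 F1L fe3]; left; exists F1 => //; apply: fan_eq_trans E1 (fan_eq3_sound fe3).
- by move=> o; right; apply: Obs_feq (fan_eq_sym E1) (obs3_sound o).
Qed.

Lemma ample_feq F G : fan_eq F G -> anticanonical_ample F -> anticanonical_ample G.
Proof.
move=> fe A t tG; have r := fan_eq_rays fe; case: fe => _ H2.
case: (H2 t tG) => s sF e; case: (A s sF) => m [h1 h2]; exists m; split.
- by move=> u ut; apply: h1; rewrite e.
- by move=> u ur ut; apply: h2; rewrite ?r ?e.
Qed.

Lemma mkv_at (x y z : int) : [/\ mkv x y z ord0 i0 = x, mkv x y z ord0 i1 = y & mkv x y z ord0 i2 = z].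
Proof. exact: mkvE. Qed.

Definition dot3 (m w : v3) : int := m.1.1 * w.1.1 + m.1.2 * w.1.2 + m.2 * w.2.
Lemma dot_toV m w : dot (toV m) (toV w) = dot3 m w.
Proof. by rewrite dotE !(coV0, coV1, coV2). Qed.

Definition det3' (a b c : v3) : int :=
  a.1.1 * (b.1.2 * c.2 - b.2 * c.1.2) - a.1.2 * (b.1.1 * c.2 - b.2 * c.1.1)
  + a.2 * (b.1.1 * c.1.2 - b.1.2 * c.1.1).
Definition scl3 (k : int) (a : v3) : v3 := (k * a.1.1, k * a.1.2, k * a.2).
Definition na_cert (F0 : fanT) : bool :=
  has (fun s => if s is [:: a; b; c] then
     let d := det3' a b c in
     has (fun w => (w \notin s) &&
        let c1 := d * det3' w b c in let c2 := d * det3' a w c in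
        let c3 := d * det3' a b w in
        (add3 (add3 (scl3 c1 a) (scl3 c2 b)) (scl3 c3 c) == w) && (1 <= c1 + c2 + c3))
       (undup (flatten F0))
   else false) F0.

Lemma dot_lin m a b c k1 k2 k3 :
  dot m (toV (add3 (add3 (scl3 k1 a) (scl3 k2 b)) (scl3 k3 c))) =
  k1 * dot m (toV a) + k2 * dot m (toV b) + k3 * dot m (toV c).
Proof. rewrite !dotE !(coV0, coV1, coV2) /=; ring. Qed.

Lemma na_sound F0 : na_cert F0 -> ~ anticanonical_ample (toF F0).
Proof.
move=> /hasP [[|a [|b [|c [|]]]] sF] //= /hasP [w wR /andP [ws /andP [/eqP ew hc]]] A.
have sF' : [:: toV a; toV b; toV c] \in toF F0 by apply: (map_f (map toV) sF).
case: (A _ sF') => m [h1 h2].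
have wr : toV w \in rays (toF F0) by rewrite rays_toF mem_toV -mem_undup.
have wn : toV w \notin [:: toV a; toV b; toV c].
  by rewrite -[[:: toV a; toV b; toV c]]/(map toV [:: a; b; c]) mem_toV.
have := h2 _ wr wn; rewrite -ew dot_lin !h1 ?inE ?eqxx ?orbT //.
move: hc; set k1 := _ * det3' w b c; set k2 := _ * det3' a w c; set k3 := _ * det3' a b w.
move=> hc hh; move: k1 k2 k3 hc hh => k1 k2 k3 hc hh; clear -hc hh; lia.
Qed.

Definition permv (k : nat) (p : v3) : v3 :=
  match k with
  | 1%N => (p.1.2, p.1.1, p.2)
  | 2%N => (p.2, p.1.2, p.1.1)
  | 3%N => (p.1.1, p.2, p.1.2)
  | _ => p
  end.
Definition sk (k : nat) : 'S_3 :=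
  match k with
  | 1%N => tperm i0 i1
  | 2%N => tperm i0 i2
  | 3%N => tperm i1 i2
  | _ => 1%g
  end.
Definition permM (k : nat) : 'M[int]_3 := perm_mx (sk k).

Lemma permV_mx k p : toV (permv k p) = toV p *m permM k.
Proof.
rewrite /permM -[sk k]invgK -col_permE.
apply: vecP; rewrite /co !mxE.
- case: k => [|[|[|[|k]]]]; rewrite /= ?invg1 ?perm1 ?tpermV ?tpermL ?tpermR ?tpermD //;
  by rewrite -/(co _ _) ?(coV0, coV1, coV2).
- case: k => [|[|[|[|k]]]]; rewrite /= ?invg1 ?perm1 ?tpermV ?tpermL ?tpermR ?tpermD //;
  by rewrite -/(co _ _) ?(coV0, coV1, coV2).
- case: k => [|[|[|[|k]]]]; rewrite /= ?invg1 ?perm1 ?tpermV ?tpermL ?tpermR ?tpermD //;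
  by rewrite -/(co _ _) ?(coV0, coV1, coV2).
Qed.

Lemma map_feq (f : vec -> vec) F G : fan_eq F G -> fan_eq (map (map f) F) (map (map f) G).
Proof.
case=> H1 H2; split=> s /mapP [s0 s0F ->].
- case: (H1 s0 s0F) => t tG e; exists (map f t); first exact: map_f.
  by move=> x; apply/mapP/mapP => -[y yi ->]; exists y; rewrite // ?e // -e.
- case: (H2 s0 s0F) => t tG e; exists (map f t); first exact: map_f.
  by move=> x; apply/mapP/mapP => -[y yi ->]; exists y; rewrite // ?e // -e.
Qed.

Lemma fan_iso_feq F G H : fan_eq F G -> fan_iso G H -> fan_iso F H.
Proof.
move=> fe [A uA fe2]; exists A => //.
by apply: fan_eq_trans fe2; apply: map_feq.
Qed.

Lemma iso_sound F0 k G0 : fan_eq3 (map (map (permv k)) F0) G0 -> fan_iso (toF F0) (toF G0).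
Proof.
move=> fe; exists (permM k); first exact: unitmx_perm.
have -> : map (map (fun u : vec => u *m permM k)) (toF F0) = toF (map (map (permv k)) F0).
  rewrite /toF -!map_comp; apply: eq_map => s /=; rewrite -!map_comp.
  by apply: eq_map => p /=; rewrite permV_mx.
exact: fan_eq3_sound.
Qed.

Definition A3' : fanT := [:: [:: (1,0,0); (0,1,0); (0,0,1)]].
Definition fan2' : fanT := star3 A3' [:: (1,0,0); (0,1,0)].
Definition fan3' : fanT := star3 A3' [:: (1,0,0); (0,1,0); (0,0,1)].
Definition fan4' : fanT :=
  [:: [:: (1,0,0); (1,1,0); (1,1,1)];
      [:: (1,0,0); (0,0,1); (1,1,1)];
      [:: (0,1,0); (0,0,1); (1,1,1)];
      [:: (0,1,0); (1,1,0); (1,1,1)]].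
Definition fan5' : fanT :=
  [:: [:: (1,0,0); (0,0,1); (1,1,2)];
      [:: (1,0,0); (1,1,1); (1,1,2)];
      [:: (1,0,0); (0,1,0); (1,1,1)];
      [:: (0,1,0); (1,1,1); (1,1,2)];
      [:: (0,1,0); (0,0,1); (1,1,2)]].
Definition five3 : seq fanT := [:: A3'; fan2'; fan3'; fan4'; fan5'].

Lemma toF_A3 : toF A3' = A3. Proof. by []. Qed.
Lemma toF_fan2 : toF fan2' = fan2.
Proof. by rewrite /fan2' -star_toF. Qed.
Lemma toF_fan3 : toF fan3' = fan3.
Proof. by rewrite /fan3' -star_toF. Qed.
Lemma toF_fan4 : toF fan4' = fan4. Proof. by []. Qed.
Lemma toF_fan5 : toF fan5' = fan5. Proof. by []. Qed.

Definition iso_cert (F0 : fanT) : bool :=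
  has (fun k => has (fun G => fan_eq3 (map (map (permv k)) F0) G) five3) (iota 0 4).
Definition final_check (L : seq fanT) : bool := all (fun F0 => na_cert F0 || iso_cert F0) L.

Lemma final_sound F0 : na_cert F0 || iso_cert F0 -> anticanonical_ample (toF F0) ->
  fan_iso (toF F0) fan1 \/ fan_iso (toF F0) fan2 \/ fan_iso (toF F0) fan3 \/
  fan_iso (toF F0) fan4 \/ fan_iso (toF F0) fan5.
Proof.
case/orP => [/na_sound na A|/hasP [k _ /hasP [G GI fe]] _]; first by case: (na A).
have := iso_sound fe; move: GI; rewrite !inE.
case/orP => [/eqP ->|]; first by rewrite toF_A3; left.
case/orP => [/eqP ->|]; first by rewrite toF_fan2; right; left.
case/orP => [/eqP ->|]; first by rewrite toF_fan3; right; right; left.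
case/orP => [/eqP ->|/eqP ->]; first by rewrite toF_fan4; right; right; right; left.
by rewrite toF_fan5; right; right; right; right.
Qed.

Definition Ms : seq v3 := [:: (-1,-1,-1); (0,-1,-1); (-1,0,-1); (1,-1,-1); (-1,1,-1); (-1,-1,1);
  (-1,0,0); (0,-1,0); (-1,2,-1); (2,-1,-1)].
Definition amp_check (F0 : fanT) : bool :=
  all (fun s => has (fun m => all (fun g => dot3 m g == -1) s &&
     all (fun w => (w \in s) || (-1 < dot3 m w)) (flatten F0)) Ms) F0.

Lemma amp_sound F0 : amp_check F0 -> anticanonical_ample (toF F0).
Proof.
move=> /allP C s' /mapP [s sF ->].
case/hasP: (C s sF) => m _ /andP [/allP h1 /allP h2].
exists (toV m); split.
- by move=> u /mapP [g gs ->]; rewrite dot_toV; apply/eqP; apply: h1.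
- move=> u; rewrite rays_toF => /mapP [w wF ->]; rewrite mem_toV => ws.
  by rewrite dot_toV; have := h2 w wF; rewrite (negbTE ws).
Qed.

Definition face3 (F0 : fanT) (T0 : seq v3) : bool :=
  (T0 != [::]) && uniq T0 && has (fun s => all (fun t => t \in s) T0) F0.

Lemma face_sound F0 T0 : face3 F0 T0 -> is_face (toF F0) (map toV T0).
Proof.
case/andP => /andP [Tn uT] /hasP [s sF /allP a]; split.
- by case: T0 Tn {uT a}.
- by rewrite (map_inj_uniq toV_inj).
- exists (map toV s); first exact: map_f.
  by move=> x /mapP [y yT ->]; rewrite mem_toV; apply: a.
Qed.
Definition Ldata : seq fanT := [::
  [:: [:: (0,0,1); (0,1,0); (1,0,0)]];
  [:: [:: (0,0,1); (0,1,0); (1,1,1)]; [:: (0,0,1); (1,0,0); (1,1,1)]; [:: (0,1,0); (1,0,0); (1,1,1)]];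
  [:: [:: (0,0,1); (0,1,0); (1,1,0)]; [:: (0,0,1); (1,0,0); (1,1,0)]];
  [:: [:: (0,0,1); (0,1,0); (1,0,1)]; [:: (0,1,0); (1,0,0); (1,0,1)]];
  [:: [:: (0,0,1); (0,1,1); (1,0,0)]; [:: (0,1,0); (0,1,1); (1,0,0)]];
  [:: [:: (0,0,1); (0,1,0); (1,1,1)]; [:: (0,0,1); (1,0,0); (2,1,1)]; [:: (0,0,1); (1,1,1); (2,1,1)]; [:: (0,1,0); (1,0,0); (2,1,1)]; [:: (0,1,0); (1,1,1); (2,1,1)]];
  [:: [:: (0,0,1); (0,1,0); (1,1,2)]; [:: (0,0,1); (1,0,0); (1,1,2)]; [:: (0,1,0); (1,0,0); (1,1,1)]; [:: (0,1,0); (1,1,1); (1,1,2)]; [:: (1,0,0); (1,1,1); (1,1,2)]];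
  [:: [:: (0,0,1); (0,1,0); (1,1,1)]; [:: (0,0,1); (1,0,0); (1,1,1)]; [:: (0,1,0); (1,1,0); (1,1,1)]; [:: (1,0,0); (1,1,0); (1,1,1)]];
  [:: [:: (0,0,1); (0,1,0); (1,2,1)]; [:: (0,0,1); (1,0,0); (1,1,1)]; [:: (0,0,1); (1,1,1); (1,2,1)]; [:: (0,1,0); (1,0,0); (1,2,1)]; [:: (1,0,0); (1,1,1); (1,2,1)]];
  [:: [:: (0,0,1); (0,1,0); (1,1,1)]; [:: (0,0,1); (1,0,1); (1,1,1)]; [:: (0,1,0); (1,0,0); (1,1,1)]; [:: (1,0,0); (1,0,1); (1,1,1)]];
  [:: [:: (0,0,1); (0,1,1); (1,1,1)]; [:: (0,0,1); (1,0,0); (1,1,1)]; [:: (0,1,0); (0,1,1); (1,1,1)]; [:: (0,1,0); (1,0,0); (1,1,1)]];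
  [:: [:: (0,0,1); (0,1,0); (1,2,1)]; [:: (0,0,1); (1,0,0); (1,1,0)]; [:: (0,0,1); (1,1,0); (1,2,1)]; [:: (0,1,0); (1,1,0); (1,2,1)]];
  [:: [:: (0,0,1); (0,1,0); (1,1,0)]; [:: (0,0,1); (1,0,0); (2,1,1)]; [:: (0,0,1); (1,1,0); (2,1,1)]; [:: (1,0,0); (1,1,0); (2,1,1)]];
  [:: [:: (0,0,1); (0,1,0); (1,1,0)]; [:: (0,0,1); (1,0,1); (1,1,0)]; [:: (1,0,0); (1,0,1); (1,1,0)]];
  [:: [:: (0,0,1); (0,1,1); (1,1,0)]; [:: (0,0,1); (1,0,0); (1,1,0)]; [:: (0,1,0); (0,1,1); (1,1,0)]];
  [:: [:: (0,0,1); (0,1,0); (1,1,2)]; [:: (0,0,1); (1,0,1); (1,1,2)]; [:: (0,1,0); (1,0,0); (1,0,1)]; [:: (0,1,0); (1,0,1); (1,1,2)]];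
  [:: [:: (0,0,1); (0,1,0); (1,0,1)]; [:: (0,1,0); (1,0,1); (1,1,0)]; [:: (1,0,0); (1,0,1); (1,1,0)]];
  [:: [:: (0,0,1); (0,1,0); (1,0,1)]; [:: (0,1,0); (1,0,0); (2,1,1)]; [:: (0,1,0); (1,0,1); (2,1,1)]; [:: (1,0,0); (1,0,1); (2,1,1)]];
  [:: [:: (0,0,1); (0,1,1); (1,0,1)]; [:: (0,1,0); (0,1,1); (1,0,1)]; [:: (0,1,0); (1,0,0); (1,0,1)]];
  [:: [:: (0,0,1); (0,1,1); (1,1,2)]; [:: (0,0,1); (1,0,0); (1,1,2)]; [:: (0,1,0); (0,1,1); (1,0,0)]; [:: (0,1,1); (1,0,0); (1,1,2)]];
  [:: [:: (0,0,1); (0,1,1); (1,0,0)]; [:: (0,1,0); (0,1,1); (1,1,0)]; [:: (0,1,1); (1,0,0); (1,1,0)]];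
  [:: [:: (0,0,1); (0,1,1); (1,0,0)]; [:: (0,1,0); (0,1,1); (1,2,1)]; [:: (0,1,0); (1,0,0); (1,2,1)]; [:: (0,1,1); (1,0,0); (1,2,1)]];
  [:: [:: (0,0,1); (0,1,1); (1,0,1)]; [:: (0,1,0); (0,1,1); (1,0,0)]; [:: (0,1,1); (1,0,0); (1,0,1)]];
  [:: [:: (0,0,1); (0,1,0); (1,1,1)]; [:: (0,0,1); (1,0,0); (2,1,1)]; [:: (0,0,1); (1,1,1); (2,1,1)]; [:: (0,1,0); (1,1,0); (2,1,1)]; [:: (0,1,0); (1,1,1); (2,1,1)]; [:: (1,0,0); (1,1,0); (2,1,1)]];
  [:: [:: (0,0,1); (0,1,0); (1,1,1)]; [:: (0,0,1); (1,0,0); (3,1,2)]; [:: (0,0,1); (1,1,1); (2,1,1)]; [:: (0,0,1); (2,1,1); (3,1,2)]; [:: (0,1,0); (1,0,0); (2,1,1)]; [:: (0,1,0); (1,1,1); (2,1,1)]; [:: (1,0,0); (2,1,1); (3,1,2)]];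
  [:: [:: (0,0,1); (0,1,0); (1,1,1)]; [:: (0,0,1); (1,0,1); (2,1,1)]; [:: (0,0,1); (1,1,1); (2,1,1)]; [:: (0,1,0); (1,0,0); (2,1,1)]; [:: (0,1,0); (1,1,1); (2,1,1)]; [:: (1,0,0); (1,0,1); (2,1,1)]];
  [:: [:: (0,0,1); (0,1,0); (1,1,1)]; [:: (0,0,1); (1,0,0); (2,1,1)]; [:: (0,0,1); (1,1,1); (2,1,1)]; [:: (0,1,0); (1,0,0); (3,2,1)]; [:: (0,1,0); (1,1,1); (2,1,1)]; [:: (0,1,0); (2,1,1); (3,2,1)]; [:: (1,0,0); (2,1,1); (3,2,1)]];
  [:: [:: (0,0,1); (0,1,0); (1,2,3)]; [:: (0,0,1); (1,0,0); (1,1,2)]; [:: (0,0,1); (1,1,2); (1,2,3)]; [:: (0,1,0); (1,0,0); (1,1,1)]; [:: (0,1,0); (1,1,1); (1,1,2)]; [:: (0,1,0); (1,1,2); (1,2,3)]; [:: (1,0,0); (1,1,1); (1,1,2)]];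
  [:: [:: (0,0,1); (0,1,0); (1,1,2)]; [:: (0,0,1); (1,0,0); (2,1,3)]; [:: (0,0,1); (1,1,2); (2,1,3)]; [:: (0,1,0); (1,0,0); (1,1,1)]; [:: (0,1,0); (1,1,1); (1,1,2)]; [:: (1,0,0); (1,1,1); (1,1,2)]; [:: (1,0,0); (1,1,2); (2,1,3)]];
  [:: [:: (0,0,1); (0,1,0); (1,1,2)]; [:: (0,0,1); (1,0,1); (1,1,2)]; [:: (0,1,0); (1,0,0); (1,1,1)]; [:: (0,1,0); (1,1,1); (1,1,2)]; [:: (1,0,0); (1,0,1); (1,1,2)]; [:: (1,0,0); (1,1,1); (1,1,2)]];
  [:: [:: (0,0,1); (0,1,1); (1,1,2)]; [:: (0,0,1); (1,0,0); (1,1,2)]; [:: (0,1,0); (0,1,1); (1,1,2)]; [:: (0,1,0); (1,0,0); (1,1,1)]; [:: (0,1,0); (1,1,1); (1,1,2)]; [:: (1,0,0); (1,1,1); (1,1,2)]];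
  [:: [:: (0,0,1); (0,1,0); (1,1,1)]; [:: (0,0,1); (1,0,1); (1,1,1)]; [:: (0,1,0); (1,1,0); (1,1,1)]; [:: (1,0,0); (1,0,1); (1,1,1)]; [:: (1,0,0); (1,1,0); (1,1,1)]];
  [:: [:: (0,0,1); (0,1,1); (1,1,1)]; [:: (0,0,1); (1,0,0); (1,1,1)]; [:: (0,1,0); (0,1,1); (1,1,1)]; [:: (0,1,0); (1,1,0); (1,1,1)]; [:: (1,0,0); (1,1,0); (1,1,1)]];
  [:: [:: (0,0,1); (0,1,0); (1,2,1)]; [:: (0,0,1); (1,0,0); (1,1,1)]; [:: (0,0,1); (1,1,1); (1,2,1)]; [:: (0,1,0); (1,1,0); (1,2,1)]; [:: (1,0,0); (1,1,0); (1,2,1)]; [:: (1,0,0); (1,1,1); (1,2,1)]];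
  [:: [:: (0,0,1); (0,1,0); (1,3,2)]; [:: (0,0,1); (1,0,0); (1,1,1)]; [:: (0,0,1); (1,1,1); (1,2,1)]; [:: (0,0,1); (1,2,1); (1,3,2)]; [:: (0,1,0); (1,0,0); (1,2,1)]; [:: (0,1,0); (1,2,1); (1,3,2)]; [:: (1,0,0); (1,1,1); (1,2,1)]];
  [:: [:: (0,0,1); (0,1,0); (1,2,1)]; [:: (0,0,1); (1,0,0); (1,1,1)]; [:: (0,0,1); (1,1,1); (1,2,1)]; [:: (0,1,0); (1,0,0); (2,3,1)]; [:: (0,1,0); (1,2,1); (2,3,1)]; [:: (1,0,0); (1,1,1); (1,2,1)]; [:: (1,0,0); (1,2,1); (2,3,1)]];
  [:: [:: (0,0,1); (0,1,1); (1,2,1)]; [:: (0,0,1); (1,0,0); (1,1,1)]; [:: (0,0,1); (1,1,1); (1,2,1)]; [:: (0,1,0); (0,1,1); (1,2,1)]; [:: (0,1,0); (1,0,0); (1,2,1)]; [:: (1,0,0); (1,1,1); (1,2,1)]];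
  [:: [:: (0,0,1); (0,1,1); (1,1,1)]; [:: (0,0,1); (1,0,1); (1,1,1)]; [:: (0,1,0); (0,1,1); (1,1,1)]; [:: (0,1,0); (1,0,0); (1,1,1)]; [:: (1,0,0); (1,0,1); (1,1,1)]];
  [:: [:: (0,0,1); (0,1,0); (1,2,1)]; [:: (0,0,1); (1,0,0); (2,1,1)]; [:: (0,0,1); (1,1,0); (1,2,1)]; [:: (0,0,1); (1,1,0); (2,1,1)]; [:: (0,1,0); (1,1,0); (1,2,1)]; [:: (1,0,0); (1,1,0); (2,1,1)]];
  [:: [:: (0,0,1); (0,1,0); (1,2,1)]; [:: (0,0,1); (1,0,1); (1,1,0)]; [:: (0,0,1); (1,1,0); (1,2,1)]; [:: (0,1,0); (1,1,0); (1,2,1)]; [:: (1,0,0); (1,0,1); (1,1,0)]];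
  [:: [:: (0,0,1); (0,1,1); (1,2,1)]; [:: (0,0,1); (1,0,0); (1,1,0)]; [:: (0,0,1); (1,1,0); (1,2,1)]; [:: (0,1,0); (0,1,1); (1,2,1)]; [:: (0,1,0); (1,1,0); (1,2,1)]];
  [:: [:: (0,0,1); (0,1,0); (1,2,1)]; [:: (0,0,1); (1,0,0); (1,1,0)]; [:: (0,0,1); (1,1,0); (2,3,1)]; [:: (0,0,1); (1,2,1); (2,3,1)]; [:: (0,1,0); (1,1,0); (2,3,1)]; [:: (0,1,0); (1,2,1); (2,3,1)]];
  [:: [:: (0,0,1); (0,1,0); (1,1,0)]; [:: (0,0,1); (1,0,0); (2,1,1)]; [:: (0,0,1); (1,1,0); (3,2,1)]; [:: (0,0,1); (2,1,1); (3,2,1)]; [:: (1,0,0); (1,1,0); (3,2,1)]; [:: (1,0,0); (2,1,1); (3,2,1)]];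
  [:: [:: (0,0,1); (0,1,0); (1,1,0)]; [:: (0,0,1); (1,0,1); (2,1,1)]; [:: (0,0,1); (1,1,0); (2,1,1)]; [:: (1,0,0); (1,0,1); (2,1,1)]; [:: (1,0,0); (1,1,0); (2,1,1)]];
  [:: [:: (0,0,1); (0,1,1); (1,1,0)]; [:: (0,0,1); (1,0,0); (2,1,1)]; [:: (0,0,1); (1,1,0); (2,1,1)]; [:: (0,1,0); (0,1,1); (1,1,0)]; [:: (1,0,0); (1,1,0); (2,1,1)]];
  [:: [:: (0,0,1); (0,1,1); (1,1,0)]; [:: (0,0,1); (1,0,1); (1,1,0)]; [:: (0,1,0); (0,1,1); (1,1,0)]; [:: (1,0,0); (1,0,1); (1,1,0)]];
  [:: [:: (0,0,1); (0,1,0); (1,1,2)]; [:: (0,0,1); (1,0,1); (1,1,2)]; [:: (0,1,0); (1,0,1); (1,1,0)]; [:: (0,1,0); (1,0,1); (1,1,2)]; [:: (1,0,0); (1,0,1); (1,1,0)]];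
  [:: [:: (0,0,1); (0,1,0); (1,1,2)]; [:: (0,0,1); (1,0,1); (1,1,2)]; [:: (0,1,0); (1,0,0); (2,1,1)]; [:: (0,1,0); (1,0,1); (1,1,2)]; [:: (0,1,0); (1,0,1); (2,1,1)]; [:: (1,0,0); (1,0,1); (2,1,1)]];
  [:: [:: (0,0,1); (0,1,0); (1,1,2)]; [:: (0,0,1); (1,0,1); (2,1,3)]; [:: (0,0,1); (1,1,2); (2,1,3)]; [:: (0,1,0); (1,0,0); (1,0,1)]; [:: (0,1,0); (1,0,1); (2,1,3)]; [:: (0,1,0); (1,1,2); (2,1,3)]];
  [:: [:: (0,0,1); (0,1,1); (1,1,2)]; [:: (0,0,1); (1,0,1); (1,1,2)]; [:: (0,1,0); (0,1,1); (1,1,2)]; [:: (0,1,0); (1,0,0); (1,0,1)]; [:: (0,1,0); (1,0,1); (1,1,2)]];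
  [:: [:: (0,0,1); (0,1,0); (1,0,1)]; [:: (0,1,0); (1,0,1); (2,1,1)]; [:: (0,1,0); (1,1,0); (2,1,1)]; [:: (1,0,0); (1,0,1); (2,1,1)]; [:: (1,0,0); (1,1,0); (2,1,1)]];
  [:: [:: (0,0,1); (0,1,1); (1,0,1)]; [:: (0,1,0); (0,1,1); (1,0,1)]; [:: (0,1,0); (1,0,1); (1,1,0)]; [:: (1,0,0); (1,0,1); (1,1,0)]];
  [:: [:: (0,0,1); (0,1,0); (1,0,1)]; [:: (0,1,0); (1,0,0); (2,1,1)]; [:: (0,1,0); (1,0,1); (3,1,2)]; [:: (0,1,0); (2,1,1); (3,1,2)]; [:: (1,0,0); (1,0,1); (3,1,2)]; [:: (1,0,0); (2,1,1); (3,1,2)]];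
  [:: [:: (0,0,1); (0,1,1); (1,0,1)]; [:: (0,1,0); (0,1,1); (1,0,1)]; [:: (0,1,0); (1,0,0); (2,1,1)]; [:: (0,1,0); (1,0,1); (2,1,1)]; [:: (1,0,0); (1,0,1); (2,1,1)]];
  [:: [:: (0,0,1); (0,1,1); (1,1,2)]; [:: (0,0,1); (1,0,0); (1,1,2)]; [:: (0,1,0); (0,1,1); (1,1,0)]; [:: (0,1,1); (1,0,0); (1,1,0)]; [:: (0,1,1); (1,0,0); (1,1,2)]];
  [:: [:: (0,0,1); (0,1,1); (1,2,3)]; [:: (0,0,1); (1,0,0); (1,1,2)]; [:: (0,0,1); (1,1,2); (1,2,3)]; [:: (0,1,0); (0,1,1); (1,0,0)]; [:: (0,1,1); (1,0,0); (1,2,3)]; [:: (1,0,0); (1,1,2); (1,2,3)]];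
  [:: [:: (0,0,1); (0,1,1); (1,1,2)]; [:: (0,0,1); (1,0,0); (1,1,2)]; [:: (0,1,0); (0,1,1); (1,2,1)]; [:: (0,1,0); (1,0,0); (1,2,1)]; [:: (0,1,1); (1,0,0); (1,1,2)]; [:: (0,1,1); (1,0,0); (1,2,1)]];
  [:: [:: (0,0,1); (0,1,1); (1,1,2)]; [:: (0,0,1); (1,0,1); (1,1,2)]; [:: (0,1,0); (0,1,1); (1,0,0)]; [:: (0,1,1); (1,0,0); (1,1,2)]; [:: (1,0,0); (1,0,1); (1,1,2)]];
  [:: [:: (0,0,1); (0,1,1); (1,0,0)]; [:: (0,1,0); (0,1,1); (1,2,1)]; [:: (0,1,0); (1,1,0); (1,2,1)]; [:: (0,1,1); (1,0,0); (1,2,1)]; [:: (1,0,0); (1,1,0); (1,2,1)]];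
  [:: [:: (0,0,1); (0,1,1); (1,0,1)]; [:: (0,1,0); (0,1,1); (1,1,0)]; [:: (0,1,1); (1,0,0); (1,0,1)]; [:: (0,1,1); (1,0,0); (1,1,0)]];
  [:: [:: (0,0,1); (0,1,1); (1,0,0)]; [:: (0,1,0); (0,1,1); (1,3,2)]; [:: (0,1,0); (1,0,0); (1,2,1)]; [:: (0,1,0); (1,2,1); (1,3,2)]; [:: (0,1,1); (1,0,0); (1,3,2)]; [:: (1,0,0); (1,2,1); (1,3,2)]];
  [:: [:: (0,0,1); (0,1,1); (1,0,1)]; [:: (0,1,0); (0,1,1); (1,2,1)]; [:: (0,1,0); (1,0,0); (1,2,1)]; [:: (0,1,1); (1,0,0); (1,0,1)]; [:: (0,1,1); (1,0,0); (1,2,1)]];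
  [:: [:: (0,0,1); (0,1,0); (1,1,1)]; [:: (0,0,1); (1,0,0); (2,1,1)]; [:: (0,0,1); (1,1,1); (2,1,1)]; [:: (0,1,0); (1,1,0); (3,2,1)]; [:: (0,1,0); (1,1,1); (2,1,1)]; [:: (0,1,0); (2,1,1); (3,2,1)]; [:: (1,0,0); (1,1,0); (3,2,1)]; [:: (1,0,0); (2,1,1); (3,2,1)]];
  [:: [:: (0,0,1); (0,1,0); (1,1,1)]; [:: (0,0,1); (1,0,1); (2,1,1)]; [:: (0,0,1); (1,1,1); (2,1,1)]; [:: (0,1,0); (1,1,0); (2,1,1)]; [:: (0,1,0); (1,1,1); (2,1,1)]; [:: (1,0,0); (1,0,1); (2,1,1)]; [:: (1,0,0); (1,1,0); (2,1,1)]];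
  [:: [:: (0,0,1); (0,1,0); (1,1,1)]; [:: (0,0,1); (1,0,0); (3,1,2)]; [:: (0,0,1); (1,1,1); (2,1,1)]; [:: (0,0,1); (2,1,1); (5,2,3)]; [:: (0,0,1); (3,1,2); (5,2,3)]; [:: (0,1,0); (1,0,0); (2,1,1)]; [:: (0,1,0); (1,1,1); (2,1,1)]; [:: (1,0,0); (2,1,1); (5,2,3)]; [:: (1,0,0); (3,1,2); (5,2,3)]];
  [:: [:: (0,0,1); (0,1,0); (1,1,1)]; [:: (0,0,1); (1,0,1); (3,1,2)]; [:: (0,0,1); (1,1,1); (2,1,1)]; [:: (0,0,1); (2,1,1); (3,1,2)]; [:: (0,1,0); (1,0,0); (2,1,1)]; [:: (0,1,0); (1,1,1); (2,1,1)]; [:: (1,0,0); (1,0,1); (3,1,2)]; [:: (1,0,0); (2,1,1); (3,1,2)]];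
  [:: [:: (0,0,1); (0,1,0); (1,1,1)]; [:: (0,0,1); (1,0,0); (2,1,1)]; [:: (0,0,1); (1,1,1); (2,1,1)]; [:: (0,1,0); (1,0,0); (3,2,1)]; [:: (0,1,0); (1,1,1); (2,1,1)]; [:: (0,1,0); (2,1,1); (5,3,2)]; [:: (0,1,0); (3,2,1); (5,3,2)]; [:: (1,0,0); (2,1,1); (5,3,2)]; [:: (1,0,0); (3,2,1); (5,3,2)]];
  [:: [:: (0,0,1); (0,1,0); (1,2,3)]; [:: (0,0,1); (1,0,0); (1,1,2)]; [:: (0,0,1); (1,1,2); (2,3,5)]; [:: (0,0,1); (1,2,3); (2,3,5)]; [:: (0,1,0); (1,0,0); (1,1,1)]; [:: (0,1,0); (1,1,1); (1,1,2)]; [:: (0,1,0); (1,1,2); (2,3,5)]; [:: (0,1,0); (1,2,3); (2,3,5)]; [:: (1,0,0); (1,1,1); (1,1,2)]];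
  [:: [:: (0,0,1); (0,1,1); (1,2,3)]; [:: (0,0,1); (1,0,0); (1,1,2)]; [:: (0,0,1); (1,1,2); (1,2,3)]; [:: (0,1,0); (0,1,1); (1,2,3)]; [:: (0,1,0); (1,0,0); (1,1,1)]; [:: (0,1,0); (1,1,1); (1,1,2)]; [:: (0,1,0); (1,1,2); (1,2,3)]; [:: (1,0,0); (1,1,1); (1,1,2)]];
  [:: [:: (0,0,1); (0,1,0); (1,1,2)]; [:: (0,0,1); (1,0,1); (2,1,3)]; [:: (0,0,1); (1,1,2); (2,1,3)]; [:: (0,1,0); (1,0,0); (1,1,1)]; [:: (0,1,0); (1,1,1); (1,1,2)]; [:: (1,0,0); (1,0,1); (2,1,3)]; [:: (1,0,0); (1,1,1); (1,1,2)]; [:: (1,0,0); (1,1,2); (2,1,3)]];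
  [:: [:: (0,0,1); (0,1,0); (1,1,2)]; [:: (0,0,1); (1,0,0); (2,1,3)]; [:: (0,0,1); (1,1,2); (3,2,5)]; [:: (0,0,1); (2,1,3); (3,2,5)]; [:: (0,1,0); (1,0,0); (1,1,1)]; [:: (0,1,0); (1,1,1); (1,1,2)]; [:: (1,0,0); (1,1,1); (1,1,2)]; [:: (1,0,0); (1,1,2); (3,2,5)]; [:: (1,0,0); (2,1,3); (3,2,5)]];
  [:: [:: (0,0,1); (0,1,1); (1,1,2)]; [:: (0,0,1); (1,0,1); (1,1,2)]; [:: (0,1,0); (0,1,1); (1,1,2)]; [:: (0,1,0); (1,0,0); (1,1,1)]; [:: (0,1,0); (1,1,1); (1,1,2)]; [:: (1,0,0); (1,0,1); (1,1,2)]; [:: (1,0,0); (1,1,1); (1,1,2)]];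
  [:: [:: (0,0,1); (0,1,1); (1,1,1)]; [:: (0,0,1); (1,0,1); (1,1,1)]; [:: (0,1,0); (0,1,1); (1,1,1)]; [:: (0,1,0); (1,1,0); (1,1,1)]; [:: (1,0,0); (1,0,1); (1,1,1)]; [:: (1,0,0); (1,1,0); (1,1,1)]];
  [:: [:: (0,0,1); (0,1,1); (1,2,1)]; [:: (0,0,1); (1,0,0); (1,1,1)]; [:: (0,0,1); (1,1,1); (1,2,1)]; [:: (0,1,0); (0,1,1); (1,2,1)]; [:: (0,1,0); (1,1,0); (1,2,1)]; [:: (1,0,0); (1,1,0); (1,2,1)]; [:: (1,0,0); (1,1,1); (1,2,1)]];
  [:: [:: (0,0,1); (0,1,0); (1,2,1)]; [:: (0,0,1); (1,0,0); (1,1,1)]; [:: (0,0,1); (1,1,1); (1,2,1)]; [:: (0,1,0); (1,1,0); (2,3,1)]; [:: (0,1,0); (1,2,1); (2,3,1)]; [:: (1,0,0); (1,1,0); (2,3,1)]; [:: (1,0,0); (1,1,1); (1,2,1)]; [:: (1,0,0); (1,2,1); (2,3,1)]];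
  [:: [:: (0,0,1); (0,1,0); (1,3,2)]; [:: (0,0,1); (1,0,0); (1,1,1)]; [:: (0,0,1); (1,1,1); (1,2,1)]; [:: (0,0,1); (1,2,1); (2,5,3)]; [:: (0,0,1); (1,3,2); (2,5,3)]; [:: (0,1,0); (1,0,0); (1,2,1)]; [:: (0,1,0); (1,2,1); (2,5,3)]; [:: (0,1,0); (1,3,2); (2,5,3)]; [:: (1,0,0); (1,1,1); (1,2,1)]];
  [:: [:: (0,0,1); (0,1,1); (1,3,2)]; [:: (0,0,1); (1,0,0); (1,1,1)]; [:: (0,0,1); (1,1,1); (1,2,1)]; [:: (0,0,1); (1,2,1); (1,3,2)]; [:: (0,1,0); (0,1,1); (1,3,2)]; [:: (0,1,0); (1,0,0); (1,2,1)]; [:: (0,1,0); (1,2,1); (1,3,2)]; [:: (1,0,0); (1,1,1); (1,2,1)]];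
  [:: [:: (0,0,1); (0,1,0); (1,2,1)]; [:: (0,0,1); (1,0,0); (1,1,1)]; [:: (0,0,1); (1,1,1); (1,2,1)]; [:: (0,1,0); (1,0,0); (2,3,1)]; [:: (0,1,0); (1,2,1); (3,5,2)]; [:: (0,1,0); (2,3,1); (3,5,2)]; [:: (1,0,0); (1,1,1); (1,2,1)]; [:: (1,0,0); (1,2,1); (3,5,2)]; [:: (1,0,0); (2,3,1); (3,5,2)]];
  [:: [:: (0,0,1); (0,1,0); (1,2,1)]; [:: (0,0,1); (1,0,0); (2,1,1)]; [:: (0,0,1); (1,1,0); (1,2,1)]; [:: (0,0,1); (1,1,0); (3,2,1)]; [:: (0,0,1); (2,1,1); (3,2,1)]; [:: (0,1,0); (1,1,0); (1,2,1)]; [:: (1,0,0); (1,1,0); (3,2,1)]; [:: (1,0,0); (2,1,1); (3,2,1)]];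
  [:: [:: (0,0,1); (0,1,0); (1,2,1)]; [:: (0,0,1); (1,0,1); (2,1,1)]; [:: (0,0,1); (1,1,0); (1,2,1)]; [:: (0,0,1); (1,1,0); (2,1,1)]; [:: (0,1,0); (1,1,0); (1,2,1)]; [:: (1,0,0); (1,0,1); (2,1,1)]; [:: (1,0,0); (1,1,0); (2,1,1)]];
  [:: [:: (0,0,1); (0,1,1); (1,2,1)]; [:: (0,0,1); (1,0,0); (2,1,1)]; [:: (0,0,1); (1,1,0); (1,2,1)]; [:: (0,0,1); (1,1,0); (2,1,1)]; [:: (0,1,0); (0,1,1); (1,2,1)]; [:: (0,1,0); (1,1,0); (1,2,1)]; [:: (1,0,0); (1,1,0); (2,1,1)]];
  [:: [:: (0,0,1); (0,1,0); (1,2,1)]; [:: (0,0,1); (1,0,0); (2,1,1)]; [:: (0,0,1); (1,1,0); (2,1,1)]; [:: (0,0,1); (1,1,0); (2,3,1)]; [:: (0,0,1); (1,2,1); (2,3,1)]; [:: (0,1,0); (1,1,0); (2,3,1)]; [:: (0,1,0); (1,2,1); (2,3,1)]; [:: (1,0,0); (1,1,0); (2,1,1)]];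
  [:: [:: (0,0,1); (0,1,1); (1,2,1)]; [:: (0,0,1); (1,0,1); (1,1,0)]; [:: (0,0,1); (1,1,0); (1,2,1)]; [:: (0,1,0); (0,1,1); (1,2,1)]; [:: (0,1,0); (1,1,0); (1,2,1)]; [:: (1,0,0); (1,0,1); (1,1,0)]];
  [:: [:: (0,0,1); (0,1,0); (1,2,1)]; [:: (0,0,1); (1,0,1); (1,1,0)]; [:: (0,0,1); (1,1,0); (2,3,1)]; [:: (0,0,1); (1,2,1); (2,3,1)]; [:: (0,1,0); (1,1,0); (2,3,1)]; [:: (0,1,0); (1,2,1); (2,3,1)]; [:: (1,0,0); (1,0,1); (1,1,0)]];
  [:: [:: (0,0,1); (0,1,1); (1,1,0)]; [:: (0,0,1); (1,0,0); (2,1,1)]; [:: (0,0,1); (1,1,0); (3,2,1)]; [:: (0,0,1); (2,1,1); (3,2,1)]; [:: (0,1,0); (0,1,1); (1,1,0)]; [:: (1,0,0); (1,1,0); (3,2,1)]; [:: (1,0,0); (2,1,1); (3,2,1)]];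
  [:: [:: (0,0,1); (0,1,1); (1,1,0)]; [:: (0,0,1); (1,0,1); (2,1,1)]; [:: (0,0,1); (1,1,0); (2,1,1)]; [:: (0,1,0); (0,1,1); (1,1,0)]; [:: (1,0,0); (1,0,1); (2,1,1)]; [:: (1,0,0); (1,1,0); (2,1,1)]];
  [:: [:: (0,0,1); (0,1,0); (1,1,2)]; [:: (0,0,1); (1,0,1); (1,1,2)]; [:: (0,1,0); (1,0,1); (1,1,2)]; [:: (0,1,0); (1,0,1); (2,1,1)]; [:: (0,1,0); (1,1,0); (2,1,1)]; [:: (1,0,0); (1,0,1); (2,1,1)]; [:: (1,0,0); (1,1,0); (2,1,1)]];
  [:: [:: (0,0,1); (0,1,0); (1,1,2)]; [:: (0,0,1); (1,0,1); (2,1,3)]; [:: (0,0,1); (1,1,2); (2,1,3)]; [:: (0,1,0); (1,0,1); (1,1,0)]; [:: (0,1,0); (1,0,1); (2,1,3)]; [:: (0,1,0); (1,1,2); (2,1,3)]; [:: (1,0,0); (1,0,1); (1,1,0)]];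
  [:: [:: (0,0,1); (0,1,1); (1,1,2)]; [:: (0,0,1); (1,0,1); (1,1,2)]; [:: (0,1,0); (0,1,1); (1,1,2)]; [:: (0,1,0); (1,0,1); (1,1,0)]; [:: (0,1,0); (1,0,1); (1,1,2)]; [:: (1,0,0); (1,0,1); (1,1,0)]];
  [:: [:: (0,0,1); (0,1,0); (1,1,2)]; [:: (0,0,1); (1,0,1); (1,1,2)]; [:: (0,1,0); (1,0,0); (2,1,1)]; [:: (0,1,0); (1,0,1); (1,1,2)]; [:: (0,1,0); (1,0,1); (3,1,2)]; [:: (0,1,0); (2,1,1); (3,1,2)]; [:: (1,0,0); (1,0,1); (3,1,2)]; [:: (1,0,0); (2,1,1); (3,1,2)]];
  [:: [:: (0,0,1); (0,1,0); (1,1,2)]; [:: (0,0,1); (1,0,1); (2,1,3)]; [:: (0,0,1); (1,1,2); (2,1,3)]; [:: (0,1,0); (1,0,0); (2,1,1)]; [:: (0,1,0); (1,0,1); (2,1,1)]; [:: (0,1,0); (1,0,1); (2,1,3)]; [:: (0,1,0); (1,1,2); (2,1,3)]; [:: (1,0,0); (1,0,1); (2,1,1)]];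
  [:: [:: (0,0,1); (0,1,1); (1,1,2)]; [:: (0,0,1); (1,0,1); (1,1,2)]; [:: (0,1,0); (0,1,1); (1,1,2)]; [:: (0,1,0); (1,0,0); (2,1,1)]; [:: (0,1,0); (1,0,1); (1,1,2)]; [:: (0,1,0); (1,0,1); (2,1,1)]; [:: (1,0,0); (1,0,1); (2,1,1)]];
  [:: [:: (0,0,1); (0,1,1); (1,0,1)]; [:: (0,1,0); (0,1,1); (1,0,1)]; [:: (0,1,0); (1,0,1); (2,1,1)]; [:: (0,1,0); (1,1,0); (2,1,1)]; [:: (1,0,0); (1,0,1); (2,1,1)]; [:: (1,0,0); (1,1,0); (2,1,1)]];
  [:: [:: (0,0,1); (0,1,1); (1,0,1)]; [:: (0,1,0); (0,1,1); (1,0,1)]; [:: (0,1,0); (1,0,0); (2,1,1)]; [:: (0,1,0); (1,0,1); (3,1,2)]; [:: (0,1,0); (2,1,1); (3,1,2)]; [:: (1,0,0); (1,0,1); (3,1,2)]; [:: (1,0,0); (2,1,1); (3,1,2)]];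
  [:: [:: (0,0,1); (0,1,1); (1,1,2)]; [:: (0,0,1); (1,0,0); (1,1,2)]; [:: (0,1,0); (0,1,1); (1,2,1)]; [:: (0,1,0); (1,1,0); (1,2,1)]; [:: (0,1,1); (1,0,0); (1,1,2)]; [:: (0,1,1); (1,0,0); (1,2,1)]; [:: (1,0,0); (1,1,0); (1,2,1)]];
  [:: [:: (0,0,1); (0,1,1); (1,2,3)]; [:: (0,0,1); (1,0,0); (1,1,2)]; [:: (0,0,1); (1,1,2); (1,2,3)]; [:: (0,1,0); (0,1,1); (1,1,0)]; [:: (0,1,1); (1,0,0); (1,1,0)]; [:: (0,1,1); (1,0,0); (1,2,3)]; [:: (1,0,0); (1,1,2); (1,2,3)]];
  [:: [:: (0,0,1); (0,1,1); (1,1,2)]; [:: (0,0,1); (1,0,1); (1,1,2)]; [:: (0,1,0); (0,1,1); (1,1,0)]; [:: (0,1,1); (1,0,0); (1,1,0)]; [:: (0,1,1); (1,0,0); (1,1,2)]; [:: (1,0,0); (1,0,1); (1,1,2)]];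
  [:: [:: (0,0,1); (0,1,1); (1,2,3)]; [:: (0,0,1); (1,0,0); (1,1,2)]; [:: (0,0,1); (1,1,2); (1,2,3)]; [:: (0,1,0); (0,1,1); (1,2,1)]; [:: (0,1,0); (1,0,0); (1,2,1)]; [:: (0,1,1); (1,0,0); (1,2,1)]; [:: (0,1,1); (1,0,0); (1,2,3)]; [:: (1,0,0); (1,1,2); (1,2,3)]];
  [:: [:: (0,0,1); (0,1,1); (1,1,2)]; [:: (0,0,1); (1,0,0); (1,1,2)]; [:: (0,1,0); (0,1,1); (1,3,2)]; [:: (0,1,0); (1,0,0); (1,2,1)]; [:: (0,1,0); (1,2,1); (1,3,2)]; [:: (0,1,1); (1,0,0); (1,1,2)]; [:: (0,1,1); (1,0,0); (1,3,2)]; [:: (1,0,0); (1,2,1); (1,3,2)]];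
  [:: [:: (0,0,1); (0,1,1); (1,1,2)]; [:: (0,0,1); (1,0,1); (1,1,2)]; [:: (0,1,0); (0,1,1); (1,2,1)]; [:: (0,1,0); (1,0,0); (1,2,1)]; [:: (0,1,1); (1,0,0); (1,1,2)]; [:: (0,1,1); (1,0,0); (1,2,1)]; [:: (1,0,0); (1,0,1); (1,1,2)]];
  [:: [:: (0,0,1); (0,1,1); (1,0,1)]; [:: (0,1,0); (0,1,1); (1,2,1)]; [:: (0,1,0); (1,1,0); (1,2,1)]; [:: (0,1,1); (1,0,0); (1,0,1)]; [:: (0,1,1); (1,0,0); (1,2,1)]; [:: (1,0,0); (1,1,0); (1,2,1)]];
  [:: [:: (0,0,1); (0,1,1); (1,0,1)]; [:: (0,1,0); (0,1,1); (1,3,2)]; [:: (0,1,0); (1,0,0); (1,2,1)]; [:: (0,1,0); (1,2,1); (1,3,2)]; [:: (0,1,1); (1,0,0); (1,0,1)]; [:: (0,1,1); (1,0,0); (1,3,2)]; [:: (1,0,0); (1,2,1); (1,3,2)]];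
  [:: [:: (0,0,1); (0,1,1); (1,2,1)]; [:: (0,0,1); (1,0,0); (2,1,1)]; [:: (0,0,1); (1,1,0); (1,2,1)]; [:: (0,0,1); (1,1,0); (3,2,1)]; [:: (0,0,1); (2,1,1); (3,2,1)]; [:: (0,1,0); (0,1,1); (1,2,1)]; [:: (0,1,0); (1,1,0); (1,2,1)]; [:: (1,0,0); (1,1,0); (3,2,1)]; [:: (1,0,0); (2,1,1); (3,2,1)]];
  [:: [:: (0,0,1); (0,1,0); (1,2,1)]; [:: (0,0,1); (1,0,0); (2,1,1)]; [:: (0,0,1); (1,1,0); (2,3,1)]; [:: (0,0,1); (1,1,0); (3,2,1)]; [:: (0,0,1); (1,2,1); (2,3,1)]; [:: (0,0,1); (2,1,1); (3,2,1)]; [:: (0,1,0); (1,1,0); (2,3,1)]; [:: (0,1,0); (1,2,1); (2,3,1)]; [:: (1,0,0); (1,1,0); (3,2,1)]; [:: (1,0,0); (2,1,1); (3,2,1)]];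
  [:: [:: (0,0,1); (0,1,1); (1,2,1)]; [:: (0,0,1); (1,0,1); (2,1,1)]; [:: (0,0,1); (1,1,0); (1,2,1)]; [:: (0,0,1); (1,1,0); (2,1,1)]; [:: (0,1,0); (0,1,1); (1,2,1)]; [:: (0,1,0); (1,1,0); (1,2,1)]; [:: (1,0,0); (1,0,1); (2,1,1)]; [:: (1,0,0); (1,1,0); (2,1,1)]];
  [:: [:: (0,0,1); (0,1,0); (1,2,1)]; [:: (0,0,1); (1,0,1); (2,1,1)]; [:: (0,0,1); (1,1,0); (2,1,1)]; [:: (0,0,1); (1,1,0); (2,3,1)]; [:: (0,0,1); (1,2,1); (2,3,1)]; [:: (0,1,0); (1,1,0); (2,3,1)]; [:: (0,1,0); (1,2,1); (2,3,1)]; [:: (1,0,0); (1,0,1); (2,1,1)]; [:: (1,0,0); (1,1,0); (2,1,1)]];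
  [:: [:: (0,0,1); (0,1,0); (1,1,2)]; [:: (0,0,1); (1,0,1); (2,1,3)]; [:: (0,0,1); (1,1,2); (2,1,3)]; [:: (0,1,0); (1,0,1); (2,1,1)]; [:: (0,1,0); (1,0,1); (2,1,3)]; [:: (0,1,0); (1,1,0); (2,1,1)]; [:: (0,1,0); (1,1,2); (2,1,3)]; [:: (1,0,0); (1,0,1); (2,1,1)]; [:: (1,0,0); (1,1,0); (2,1,1)]];
  [:: [:: (0,0,1); (0,1,1); (1,1,2)]; [:: (0,0,1); (1,0,1); (1,1,2)]; [:: (0,1,0); (0,1,1); (1,1,2)]; [:: (0,1,0); (1,0,1); (1,1,2)]; [:: (0,1,0); (1,0,1); (2,1,1)]; [:: (0,1,0); (1,1,0); (2,1,1)]; [:: (1,0,0); (1,0,1); (2,1,1)]; [:: (1,0,0); (1,1,0); (2,1,1)]];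
  [:: [:: (0,0,1); (0,1,0); (1,1,2)]; [:: (0,0,1); (1,0,1); (2,1,3)]; [:: (0,0,1); (1,1,2); (2,1,3)]; [:: (0,1,0); (1,0,0); (2,1,1)]; [:: (0,1,0); (1,0,1); (2,1,3)]; [:: (0,1,0); (1,0,1); (3,1,2)]; [:: (0,1,0); (1,1,2); (2,1,3)]; [:: (0,1,0); (2,1,1); (3,1,2)]; [:: (1,0,0); (1,0,1); (3,1,2)]; [:: (1,0,0); (2,1,1); (3,1,2)]];
  [:: [:: (0,0,1); (0,1,1); (1,1,2)]; [:: (0,0,1); (1,0,1); (1,1,2)]; [:: (0,1,0); (0,1,1); (1,1,2)]; [:: (0,1,0); (1,0,0); (2,1,1)]; [:: (0,1,0); (1,0,1); (1,1,2)]; [:: (0,1,0); (1,0,1); (3,1,2)]; [:: (0,1,0); (2,1,1); (3,1,2)]; [:: (1,0,0); (1,0,1); (3,1,2)]; [:: (1,0,0); (2,1,1); (3,1,2)]];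
  [:: [:: (0,0,1); (0,1,1); (1,2,3)]; [:: (0,0,1); (1,0,0); (1,1,2)]; [:: (0,0,1); (1,1,2); (1,2,3)]; [:: (0,1,0); (0,1,1); (1,2,1)]; [:: (0,1,0); (1,1,0); (1,2,1)]; [:: (0,1,1); (1,0,0); (1,2,1)]; [:: (0,1,1); (1,0,0); (1,2,3)]; [:: (1,0,0); (1,1,0); (1,2,1)]; [:: (1,0,0); (1,1,2); (1,2,3)]];
  [:: [:: (0,0,1); (0,1,1); (1,1,2)]; [:: (0,0,1); (1,0,1); (1,1,2)]; [:: (0,1,0); (0,1,1); (1,2,1)]; [:: (0,1,0); (1,1,0); (1,2,1)]; [:: (0,1,1); (1,0,0); (1,1,2)]; [:: (0,1,1); (1,0,0); (1,2,1)]; [:: (1,0,0); (1,0,1); (1,1,2)]; [:: (1,0,0); (1,1,0); (1,2,1)]];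
  [:: [:: (0,0,1); (0,1,1); (1,2,3)]; [:: (0,0,1); (1,0,0); (1,1,2)]; [:: (0,0,1); (1,1,2); (1,2,3)]; [:: (0,1,0); (0,1,1); (1,3,2)]; [:: (0,1,0); (1,0,0); (1,2,1)]; [:: (0,1,0); (1,2,1); (1,3,2)]; [:: (0,1,1); (1,0,0); (1,2,3)]; [:: (0,1,1); (1,0,0); (1,3,2)]; [:: (1,0,0); (1,1,2); (1,2,3)]; [:: (1,0,0); (1,2,1); (1,3,2)]];
  [:: [:: (0,0,1); (0,1,1); (1,1,2)]; [:: (0,0,1); (1,0,1); (1,1,2)]; [:: (0,1,0); (0,1,1); (1,3,2)]; [:: (0,1,0); (1,0,0); (1,2,1)]; [:: (0,1,0); (1,2,1); (1,3,2)]; [:: (0,1,1); (1,0,0); (1,1,2)]; [:: (0,1,1); (1,0,0); (1,3,2)]; [:: (1,0,0); (1,0,1); (1,1,2)]; [:: (1,0,0); (1,2,1); (1,3,2)]]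
].
Definition Hints : seq nat := [:: 0; 0; 0; 4; 3; 2; 1; 1; 1; 1; 10; 6; 8; 0; 1; 1; 1; 9; 6; 5; 0; 1; 1; 1; 7; 8; 5; 0; 2; 2; 2; 14; 7; 0; 11; 2; 2; 2; 13; 7; 0; 12; 3; 3; 3; 18; 0; 9; 15; 3; 3; 3; 16; 9; 0; 17; 4; 4; 4; 0; 22; 10; 19; 4; 4; 4; 0; 20; 10; 21; 5; 5; 5; 0; 0; 0; 0; 5; 5; 5; 25; 0; 0; 24; 5; 5; 5; 0; 0; 0; 0; 5; 5; 5; 23; 0; 0; 26; 5; 5; 5; 0; 0; 0; 0; 6; 6; 6; 30; 0; 0; 27; 6; 6; 6; 29; 0; 0; 28; 6; 6; 6; 0; 0; 0; 0; 6; 6; 6; 0; 0; 0; 0; 6; 6; 6; 0; 0; 0; 0; 7; 7; 7; 32; 0; 0; 0; 7; 7; 7; 31; 0; 0; 0; 7; 7; 7; 0; 0; 0; 0; 7; 7; 7; 0; 0; 0; 0; 8; 8; 8; 36; 0; 0; 34; 8; 8; 8; 0; 0; 0; 0; 8; 8; 8; 0; 0; 0; 0; 8; 8; 8; 33; 0; 0; 35; 8; 8; 8; 0; 0; 0; 0; 9; 9; 9; 37; 0; 0; 0; 9; 9; 9; 0; 0; 0; 0; 9; 9; 9; 31; 0; 0; 0; 9; 9; 9; 0; 0; 0; 0; 10; 10; 10; 0; 0; 0; 0; 10; 10; 10; 37; 0; 0; 0; 10; 10; 10; 0; 0; 0; 0; 10; 10; 10; 32; 0; 0; 0; 11; 11;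 11; 40; 0; 0; 0; 11; 11; 11; 39; 0; 0; 38; 11; 11; 11; 0; 0; 41; 0; 11; 11; 11; 0; 0; 41; 0; 12; 12; 12; 44; 0; 0; 38; 12; 12; 12; 43; 0; 0; 0; 12; 12; 12; 0; 0; 42; 0; 12; 12; 12; 0; 0; 42; 0; 13; 13; 13; 45; 0; 0; 39; 13; 13; 13; 0; 0; 43; 0; 13; 13; 13; 0; 0; 43; 0; 14; 14; 14; 0; 0; 40; 0; 14; 14; 14; 45; 0; 0; 44; 14; 14; 14; 0; 0; 40; 0; 15; 15; 15; 49; 0; 0; 0; 15; 15; 15; 0; 0; 48; 0; 15; 15; 15; 46; 0; 0; 47; 15; 15; 15; 0; 0; 48; 0; 16; 16; 16; 51; 0; 0; 46; 16; 16; 16; 0; 0; 50; 0; 16; 16; 16; 0; 0; 50; 0; 17; 17; 17; 53; 0; 0; 47; 17; 17; 17; 50; 0; 0; 0; 17; 17; 17; 0; 0; 52; 0; 17; 17; 17; 0; 0; 52; 0; 18; 18; 18; 0; 0; 49; 0; 18; 18; 18; 0; 0; 49; 0; 18; 18; 18; 51; 0; 0; 53; 19; 19; 19; 0; 0; 55; 0; 19; 19; 19; 57; 0; 0; 0; 19; 19; 19; 0; 54; 0; 56; 19; 19; 19; 0; 55; 0; 0; 20; 20; 20; 0; 59; 0; 54; 20; 20; 20; 0; 0; 58; 0; 20; 20; 20; 0; 58; 0; 0; 21; 21; 21; 0; 61; 0; 56; 21; 21; 21; 0; 0; 60; 0; 21; 21; 21; 58; 0; 0; 0; 21; 21; 21;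 0; 60; 0; 0; 22; 22; 22; 0; 0; 57; 0; 22; 22; 22; 0; 59; 0; 61; 22; 22; 22; 0; 57; 0; 0; 23; 23; 23; 0; 0; 0; 0; 23; 23; 23; 63; 0; 0; 0; 23; 23; 23; 0; 0; 0; 0; 23; 23; 23; 0; 0; 62; 0; 23; 23; 23; 0; 0; 0; 0; 23; 23; 23; 0; 0; 62; 0; 24; 24; 24; 0; 0; 0; 0; 24; 24; 24; 65; 0; 0; 0; 24; 24; 24; 0; 0; 0; 0; 24; 24; 24; 0; 0; 64; 0; 24; 24; 24; 0; 0; 0; 0; 24; 24; 24; 0; 0; 0; 0; 24; 24; 24; 0; 0; 64; 0; 25; 25; 25; 0; 0; 0; 0; 25; 25; 25; 0; 0; 65; 0; 25; 25; 25; 0; 0; 0; 0; 25; 25; 25; 63; 0; 0; 0; 25; 25; 25; 0; 0; 0; 0; 25; 25; 25; 0; 0; 65; 0; 26; 26; 26; 0; 0; 0; 0; 26; 26; 26; 0; 0; 0; 0; 26; 26; 26; 0; 0; 0; 0; 26; 26; 26; 62; 0; 0; 0; 26; 26; 26; 0; 0; 0; 0; 26; 26; 26; 0; 0; 66; 0; 26; 26; 26; 0; 0; 66; 0; 27; 27; 27; 68; 0; 0; 0; 27; 27; 27; 0; 0; 0; 0; 27; 27; 27; 0; 0; 67; 0; 27; 27; 27; 0; 0; 0; 0; 27; 27; 27; 0; 0; 0; 0; 27; 27; 27; 0; 0; 67; 0; 27; 27; 27; 0; 0; 0; 0; 28; 28; 28; 0; 0; 0; 0; 28; 28; 28; 69;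 0; 0; 0; 28; 28; 28; 0; 0; 70; 0; 28; 28; 28; 0; 0; 0; 0; 28; 28; 28; 0; 0; 0; 0; 28; 28; 28; 0; 0; 0; 0; 28; 28; 28; 0; 0; 70; 0; 29; 29; 29; 71; 0; 0; 0; 29; 29; 29; 0; 0; 69; 0; 29; 29; 29; 0; 0; 0; 0; 29; 29; 29; 0; 0; 0; 0; 29; 29; 29; 0; 0; 69; 0; 29; 29; 29; 0; 0; 0; 0; 30; 30; 30; 0; 0; 68; 0; 30; 30; 30; 71; 0; 0; 0; 30; 30; 30; 0; 0; 68; 0; 30; 30; 30; 0; 0; 0; 0; 30; 30; 30; 0; 0; 0; 0; 30; 30; 30; 0; 0; 0; 0; 31; 31; 31; 72; 0; 0; 0; 31; 31; 31; 0; 0; 0; 0; 31; 31; 31; 0; 0; 0; 0; 31; 31; 31; 0; 0; 0; 0; 31; 31; 31; 0; 0; 0; 0; 32; 32; 32; 0; 0; 0; 0; 32; 32; 32; 72; 0; 0; 0; 32; 32; 32; 0; 0; 0; 0; 32; 32; 32; 0; 0; 0; 0; 32; 32; 32; 0; 0; 0; 0; 33; 33; 33; 73; 0; 0; 0; 33; 33; 33; 0; 0; 0; 0; 33; 33; 33; 0; 0; 0; 0; 33; 33; 33; 0; 0; 74; 0; 33; 33; 33; 0; 0; 74; 0; 33; 33; 33; 0; 0; 0; 0; 34; 34; 34; 76; 0; 0; 0; 34; 34; 34; 0; 0; 0; 0; 34; 34; 34; 0; 0; 0; 0; 34; 34; 34; 0; 0; 75; 0; 34; 34; 34; 0; 0;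 0; 0; 34; 34; 34; 0; 0; 75; 0; 34; 34; 34; 0; 0; 0; 0; 35; 35; 35; 0; 0; 0; 0; 35; 35; 35; 0; 0; 0; 0; 35; 35; 35; 0; 0; 0; 0; 35; 35; 35; 74; 0; 0; 0; 35; 35; 35; 0; 0; 77; 0; 35; 35; 35; 0; 0; 0; 0; 35; 35; 35; 0; 0; 77; 0; 36; 36; 36; 0; 0; 76; 0; 36; 36; 36; 0; 0; 0; 0; 36; 36; 36; 0; 0; 0; 0; 36; 36; 36; 0; 0; 76; 0; 36; 36; 36; 73; 0; 0; 0; 36; 36; 36; 0; 0; 0; 0; 37; 37; 37; 0; 0; 0; 0; 37; 37; 37; 0; 0; 0; 0; 37; 37; 37; 0; 0; 0; 0; 37; 37; 37; 72; 0; 0; 0; 37; 37; 37; 0; 0; 0; 0; 38; 38; 38; 80; 0; 0; 0; 38; 38; 38; 79; 0; 0; 0; 38; 38; 38; 0; 0; 81; 0; 38; 38; 38; 0; 0; 78; 0; 38; 38; 38; 0; 0; 81; 0; 38; 38; 38; 0; 0; 78; 0; 39; 39; 39; 82; 0; 0; 0; 39; 39; 39; 0; 0; 79; 0; 39; 39; 39; 0; 0; 83; 0; 39; 39; 39; 0; 0; 83; 0; 39; 39; 39; 0; 0; 79; 0; 40; 40; 40; 0; 0; 0; 0; 40; 40; 40; 82; 0; 0; 80; 40; 40; 40; 0; 0; 0; 0; 40; 40; 40; 0; 0; 0; 0; 40; 40; 40; 0; 0; 0; 0; 41; 41; 41; 0; 0; 0; 0; 41; 41; 41; 83; 0; 0;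 81; 41; 41; 41; 0; 0; 0; 0; 41; 41; 41; 0; 0; 0; 0; 41; 41; 41; 0; 0; 0; 0; 41; 41; 41; 0; 0; 0; 0; 42; 42; 42; 84; 0; 0; 78; 42; 42; 42; 0; 0; 0; 0; 42; 42; 42; 0; 0; 0; 0; 42; 42; 42; 0; 0; 0; 0; 42; 42; 42; 0; 0; 0; 0; 42; 42; 42; 0; 0; 0; 0; 43; 43; 43; 85; 0; 0; 79; 43; 43; 43; 0; 0; 0; 0; 43; 43; 43; 0; 0; 0; 0; 43; 43; 43; 0; 0; 0; 0; 43; 43; 43; 0; 0; 0; 0; 44; 44; 44; 0; 0; 80; 0; 44; 44; 44; 85; 0; 0; 0; 44; 44; 44; 0; 0; 84; 0; 44; 44; 44; 0; 0; 80; 0; 44; 44; 44; 0; 0; 84; 0; 45; 45; 45; 0; 0; 82; 0; 45; 45; 45; 0; 0; 85; 0; 45; 45; 45; 0; 0; 82; 0; 45; 45; 45; 0; 0; 85; 0; 46; 46; 46; 88; 0; 0; 0; 46; 46; 46; 0; 0; 87; 0; 46; 46; 46; 0; 0; 86; 0; 46; 46; 46; 0; 0; 87; 0; 46; 46; 46; 0; 0; 86; 0; 47; 47; 47; 91; 0; 0; 0; 47; 47; 47; 0; 0; 90; 0; 47; 47; 47; 86; 0; 0; 0; 47; 47; 47; 0; 0; 90; 0; 47; 47; 47; 0; 0; 89; 0; 47; 47; 47; 0; 0; 89; 0; 48; 48; 48; 0; 0; 0; 0; 48; 48; 48; 0; 0; 0; 0; 48; 48; 48; 0; 0; 0; 0;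 48; 48; 48; 87; 0; 0; 90; 48; 48; 48; 0; 0; 0; 0; 48; 48; 48; 0; 0; 0; 0; 49; 49; 49; 0; 0; 0; 0; 49; 49; 49; 0; 0; 0; 0; 49; 49; 49; 0; 0; 0; 0; 49; 49; 49; 88; 0; 0; 91; 49; 49; 49; 0; 0; 0; 0; 50; 50; 50; 92; 0; 0; 86; 50; 50; 50; 0; 0; 0; 0; 50; 50; 50; 0; 0; 0; 0; 50; 50; 50; 0; 0; 0; 0; 50; 50; 50; 0; 0; 0; 0; 51; 51; 51; 0; 0; 88; 0; 51; 51; 51; 0; 0; 88; 0; 51; 51; 51; 0; 0; 92; 0; 51; 51; 51; 0; 0; 92; 0; 52; 52; 52; 93; 0; 0; 89; 52; 52; 52; 0; 0; 0; 0; 52; 52; 52; 0; 0; 0; 0; 52; 52; 52; 0; 0; 0; 0; 52; 52; 52; 0; 0; 0; 0; 52; 52; 52; 0; 0; 0; 0; 53; 53; 53; 0; 0; 91; 0; 53; 53; 53; 0; 0; 91; 0; 53; 53; 53; 92; 0; 0; 0; 53; 53; 53; 0; 0; 93; 0; 53; 53; 53; 0; 0; 93; 0; 54; 54; 54; 0; 0; 95; 0; 54; 54; 54; 96; 0; 0; 0; 54; 54; 54; 0; 0; 94; 0; 54; 54; 54; 0; 94; 0; 0; 54; 54; 54; 0; 95; 0; 0; 55; 55; 55; 0; 0; 0; 0; 55; 55; 55; 0; 0; 0; 0; 55; 55; 55; 0; 0; 0; 0; 55; 55; 55; 0; 95; 0; 97; 55; 55; 55; 0; 0; 0; 0; 55;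 55; 55; 0; 0; 0; 0; 56; 56; 56; 0; 0; 97; 0; 56; 56; 56; 99; 0; 0; 0; 56; 56; 56; 0; 0; 98; 0; 56; 56; 56; 94; 0; 0; 0; 56; 56; 56; 0; 97; 0; 0; 56; 56; 56; 0; 98; 0; 0; 57; 57; 57; 0; 0; 0; 0; 57; 57; 57; 0; 0; 0; 0; 57; 57; 57; 0; 96; 0; 99; 57; 57; 57; 0; 0; 0; 0; 57; 57; 57; 0; 0; 0; 0; 58; 58; 58; 0; 100; 0; 94; 58; 58; 58; 0; 0; 0; 0; 58; 58; 58; 0; 0; 0; 0; 58; 58; 58; 0; 0; 0; 0; 58; 58; 58; 0; 0; 0; 0; 59; 59; 59; 0; 0; 96; 0; 59; 59; 59; 0; 0; 100; 0; 59; 59; 59; 0; 96; 0; 0; 59; 59; 59; 0; 100; 0; 0; 60; 60; 60; 0; 101; 0; 98; 60; 60; 60; 0; 0; 0; 0; 60; 60; 60; 0; 0; 0; 0; 60; 60; 60; 0; 0; 0; 0; 60; 60; 60; 0; 0; 0; 0; 60; 60; 60; 0; 0; 0; 0; 61; 61; 61; 0; 0; 99; 0; 61; 61; 61; 0; 0; 101; 0; 61; 61; 61; 100; 0; 0; 0; 61; 61; 61; 0; 99; 0; 0; 61; 61; 61; 0; 101; 0; 0; 62; 62; 62; 0; 0; 0; 0; 62; 62; 62; 0; 0; 0; 0; 62; 62; 62; 0; 0; 0; 0; 62; 62; 62; 0; 0; 0; 0; 62; 62; 62; 0; 0; 0; 0; 62; 62; 62; 0; 0; 0; 0; 62; 62;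 62; 0; 0; 0; 0; 62; 62; 62; 0; 0; 0; 0; 63; 63; 63; 0; 0; 0; 0; 63; 63; 63; 0; 0; 0; 0; 63; 63; 63; 0; 0; 0; 0; 63; 63; 63; 0; 0; 0; 0; 63; 63; 63; 0; 0; 0; 0; 63; 63; 63; 0; 0; 0; 0; 63; 63; 63; 0; 0; 0; 0; 64; 64; 64; 0; 0; 0; 0; 64; 64; 64; 0; 0; 0; 0; 64; 64; 64; 0; 0; 0; 0; 64; 64; 64; 0; 0; 0; 0; 64; 64; 64; 0; 0; 0; 0; 64; 64; 64; 0; 0; 0; 0; 64; 64; 64; 0; 0; 0; 0; 64; 64; 64; 0; 0; 0; 0; 64; 64; 64; 0; 0; 0; 0; 65; 65; 65; 0; 0; 0; 0; 65; 65; 65; 0; 0; 0; 0; 65; 65; 65; 0; 0; 0; 0; 65; 65; 65; 0; 0; 0; 0; 65; 65; 65; 0; 0; 0; 0; 65; 65; 65; 0; 0; 0; 0; 65; 65; 65; 0; 0; 0; 0; 65; 65; 65; 0; 0; 0; 0; 66; 66; 66; 0; 0; 0; 0; 66; 66; 66; 0; 0; 0; 0; 66; 66; 66; 0; 0; 0; 0; 66; 66; 66; 0; 0; 0; 0; 66; 66; 66; 0; 0; 0; 0; 66; 66; 66; 0; 0; 0; 0; 66; 66; 66; 0; 0; 0; 0; 66; 66; 66; 0; 0; 0; 0; 66; 66; 66; 0; 0; 0; 0; 67; 67; 67; 0; 0; 0; 0; 67; 67; 67; 0; 0; 0; 0; 67; 67; 67; 0; 0; 0; 0; 67; 67; 67;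 0; 0; 0; 0; 67; 67; 67; 0; 0; 0; 0; 67; 67; 67; 0; 0; 0; 0; 67; 67; 67; 0; 0; 0; 0; 67; 67; 67; 0; 0; 0; 0; 67; 67; 67; 0; 0; 0; 0; 68; 68; 68; 0; 0; 0; 0; 68; 68; 68; 0; 0; 0; 0; 68; 68; 68; 0; 0; 0; 0; 68; 68; 68; 0; 0; 0; 0; 68; 68; 68; 0; 0; 0; 0; 68; 68; 68; 0; 0; 0; 0; 68; 68; 68; 0; 0; 0; 0; 68; 68; 68; 0; 0; 0; 0; 69; 69; 69; 0; 0; 0; 0; 69; 69; 69; 0; 0; 0; 0; 69; 69; 69; 0; 0; 0; 0; 69; 69; 69; 0; 0; 0; 0; 69; 69; 69; 0; 0; 0; 0; 69; 69; 69; 0; 0; 0; 0; 69; 69; 69; 0; 0; 0; 0; 69; 69; 69; 0; 0; 0; 0; 70; 70; 70; 0; 0; 0; 0; 70; 70; 70; 0; 0; 0; 0; 70; 70; 70; 0; 0; 0; 0; 70; 70; 70; 0; 0; 0; 0; 70; 70; 70; 0; 0; 0; 0; 70; 70; 70; 0; 0; 0; 0; 70; 70; 70; 0; 0; 0; 0; 70; 70; 70; 0; 0; 0; 0; 70; 70; 70; 0; 0; 0; 0; 71; 71; 71; 0; 0; 0; 0; 71; 71; 71; 0; 0; 0; 0; 71; 71; 71; 0; 0; 0; 0; 71; 71; 71; 0; 0; 0; 0; 71; 71; 71; 0; 0; 0; 0; 71; 71; 71; 0; 0; 0; 0; 71; 71; 71; 0; 0; 0; 0; 72; 72; 72; 0;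 0; 0; 0; 72; 72; 72; 0; 0; 0; 0; 72; 72; 72; 0; 0; 0; 0; 72; 72; 72; 0; 0; 0; 0; 72; 72; 72; 0; 0; 0; 0; 72; 72; 72; 0; 0; 0; 0; 73; 73; 73; 0; 0; 0; 0; 73; 73; 73; 0; 0; 0; 0; 73; 73; 73; 0; 0; 0; 0; 73; 73; 73; 0; 0; 0; 0; 73; 73; 73; 0; 0; 0; 0; 73; 73; 73; 0; 0; 0; 0; 73; 73; 73; 0; 0; 0; 0; 74; 74; 74; 0; 0; 0; 0; 74; 74; 74; 0; 0; 0; 0; 74; 74; 74; 0; 0; 0; 0; 74; 74; 74; 0; 0; 0; 0; 74; 74; 74; 0; 0; 0; 0; 74; 74; 74; 0; 0; 0; 0; 74; 74; 74; 0; 0; 0; 0; 74; 74; 74; 0; 0; 0; 0; 75; 75; 75; 0; 0; 0; 0; 75; 75; 75; 0; 0; 0; 0; 75; 75; 75; 0; 0; 0; 0; 75; 75; 75; 0; 0; 0; 0; 75; 75; 75; 0; 0; 0; 0; 75; 75; 75; 0; 0; 0; 0; 75; 75; 75; 0; 0; 0; 0; 75; 75; 75; 0; 0; 0; 0; 75; 75; 75; 0; 0; 0; 0; 76; 76; 76; 0; 0; 0; 0; 76; 76; 76; 0; 0; 0; 0; 76; 76; 76; 0; 0; 0; 0; 76; 76; 76; 0; 0; 0; 0; 76; 76; 76; 0; 0; 0; 0; 76; 76; 76; 0; 0; 0; 0; 76; 76; 76; 0; 0; 0; 0; 76; 76; 76; 0; 0; 0; 0; 77; 77; 77; 0; 0;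 0; 0; 77; 77; 77; 0; 0; 0; 0; 77; 77; 77; 0; 0; 0; 0; 77; 77; 77; 0; 0; 0; 0; 77; 77; 77; 0; 0; 0; 0; 77; 77; 77; 0; 0; 0; 0; 77; 77; 77; 0; 0; 0; 0; 77; 77; 77; 0; 0; 0; 0; 77; 77; 77; 0; 0; 0; 0; 78; 78; 78; 102; 0; 0; 0; 78; 78; 78; 0; 0; 0; 0; 78; 78; 78; 0; 0; 103; 0; 78; 78; 78; 0; 0; 0; 0; 78; 78; 78; 0; 0; 0; 0; 78; 78; 78; 0; 0; 103; 0; 78; 78; 78; 0; 0; 0; 0; 78; 78; 78; 0; 0; 0; 0; 79; 79; 79; 104; 0; 0; 0; 79; 79; 79; 0; 0; 0; 0; 79; 79; 79; 0; 0; 105; 0; 79; 79; 79; 0; 0; 0; 0; 79; 79; 79; 0; 0; 105; 0; 79; 79; 79; 0; 0; 0; 0; 79; 79; 79; 0; 0; 0; 0; 80; 80; 80; 0; 0; 0; 0; 80; 80; 80; 104; 0; 0; 0; 80; 80; 80; 0; 0; 0; 0; 80; 80; 80; 0; 0; 102; 0; 80; 80; 80; 0; 0; 0; 0; 80; 80; 80; 0; 0; 0; 0; 80; 80; 80; 0; 0; 102; 0; 81; 81; 81; 0; 0; 0; 0; 81; 81; 81; 105; 0; 0; 0; 81; 81; 81; 0; 0; 103; 0; 81; 81; 81; 0; 0; 0; 0; 81; 81; 81; 0; 0; 0; 0; 81; 81; 81; 0; 0; 0; 0; 81; 81; 81; 0; 0; 0; 0; 81; 81; 81; 0; 0; 103;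 0; 82; 82; 82; 0; 0; 0; 0; 82; 82; 82; 0; 0; 104; 0; 82; 82; 82; 0; 0; 0; 0; 82; 82; 82; 0; 0; 0; 0; 82; 82; 82; 0; 0; 0; 0; 82; 82; 82; 0; 0; 104; 0; 83; 83; 83; 0; 0; 0; 0; 83; 83; 83; 0; 0; 105; 0; 83; 83; 83; 0; 0; 0; 0; 83; 83; 83; 0; 0; 0; 0; 83; 83; 83; 0; 0; 0; 0; 83; 83; 83; 0; 0; 0; 0; 83; 83; 83; 0; 0; 105; 0; 84; 84; 84; 0; 0; 102; 0; 84; 84; 84; 0; 0; 0; 0; 84; 84; 84; 0; 0; 0; 0; 84; 84; 84; 0; 0; 0; 0; 84; 84; 84; 0; 0; 102; 0; 84; 84; 84; 0; 0; 0; 0; 84; 84; 84; 0; 0; 0; 0; 85; 85; 85; 0; 0; 104; 0; 85; 85; 85; 0; 0; 0; 0; 85; 85; 85; 0; 0; 0; 0; 85; 85; 85; 0; 0; 104; 0; 85; 85; 85; 0; 0; 0; 0; 85; 85; 85; 0; 0; 0; 0; 86; 86; 86; 107; 0; 0; 0; 86; 86; 86; 0; 0; 106; 0; 86; 86; 86; 0; 0; 106; 0; 86; 86; 86; 0; 0; 0; 0; 86; 86; 86; 0; 0; 0; 0; 86; 86; 86; 0; 0; 0; 0; 86; 86; 86; 0; 0; 0; 0; 87; 87; 87; 0; 0; 0; 0; 87; 87; 87; 0; 0; 0; 0; 87; 87; 87; 0; 0; 0; 0; 87; 87; 87; 0; 0; 106; 0; 87; 87; 87; 0; 0; 0; 0;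 87; 87; 87; 0; 0; 0; 0; 87; 87; 87; 0; 0; 106; 0; 88; 88; 88; 0; 0; 0; 0; 88; 88; 88; 0; 0; 0; 0; 88; 88; 88; 0; 0; 0; 0; 88; 88; 88; 0; 0; 107; 0; 88; 88; 88; 0; 0; 0; 0; 88; 88; 88; 0; 0; 107; 0; 89; 89; 89; 109; 0; 0; 0; 89; 89; 89; 0; 0; 108; 0; 89; 89; 89; 0; 0; 0; 0; 89; 89; 89; 0; 0; 108; 0; 89; 89; 89; 0; 0; 0; 0; 89; 89; 89; 0; 0; 0; 0; 89; 89; 89; 0; 0; 0; 0; 89; 89; 89; 0; 0; 0; 0; 90; 90; 90; 0; 0; 0; 0; 90; 90; 90; 0; 0; 0; 0; 90; 90; 90; 0; 0; 0; 0; 90; 90; 90; 106; 0; 0; 0; 90; 90; 90; 0; 0; 108; 0; 90; 90; 90; 0; 0; 0; 0; 90; 90; 90; 0; 0; 0; 0; 90; 90; 90; 0; 0; 108; 0; 91; 91; 91; 0; 0; 0; 0; 91; 91; 91; 0; 0; 0; 0; 91; 91; 91; 0; 0; 0; 0; 91; 91; 91; 107; 0; 0; 0; 91; 91; 91; 0; 0; 0; 0; 91; 91; 91; 0; 0; 109; 0; 91; 91; 91; 0; 0; 109; 0; 92; 92; 92; 0; 0; 107; 0; 92; 92; 92; 0; 0; 107; 0; 92; 92; 92; 0; 0; 0; 0; 92; 92; 92; 0; 0; 0; 0; 92; 92; 92; 0; 0; 0; 0; 92; 92; 92; 0; 0; 0; 0; 93; 93; 93; 0; 0; 109; 0; 93;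 93; 93; 0; 0; 109; 0; 93; 93; 93; 0; 0; 0; 0; 93; 93; 93; 0; 0; 0; 0; 93; 93; 93; 0; 0; 0; 0; 93; 93; 93; 0; 0; 0; 0; 93; 93; 93; 0; 0; 0; 0; 94; 94; 94; 0; 0; 110; 0; 94; 94; 94; 111; 0; 0; 0; 94; 94; 94; 0; 0; 0; 0; 94; 94; 94; 0; 0; 0; 0; 94; 94; 94; 0; 110; 0; 0; 94; 94; 94; 0; 0; 0; 0; 94; 94; 94; 0; 0; 0; 0; 95; 95; 95; 0; 0; 0; 0; 95; 95; 95; 0; 0; 0; 0; 95; 95; 95; 0; 0; 0; 0; 95; 95; 95; 0; 0; 110; 0; 95; 95; 95; 0; 110; 0; 0; 95; 95; 95; 0; 0; 0; 0; 95; 95; 95; 0; 0; 0; 0; 96; 96; 96; 0; 0; 0; 0; 96; 96; 96; 0; 0; 0; 0; 96; 96; 96; 0; 0; 111; 0; 96; 96; 96; 0; 111; 0; 0; 96; 96; 96; 0; 0; 0; 0; 96; 96; 96; 0; 0; 0; 0; 97; 97; 97; 0; 0; 0; 0; 97; 97; 97; 0; 0; 0; 0; 97; 97; 97; 0; 0; 0; 0; 97; 97; 97; 0; 0; 112; 0; 97; 97; 97; 110; 0; 0; 0; 97; 97; 97; 0; 112; 0; 0; 97; 97; 97; 0; 0; 0; 0; 97; 97; 97; 0; 0; 0; 0; 98; 98; 98; 0; 0; 112; 0; 98; 98; 98; 113; 0; 0; 0; 98; 98; 98; 0; 0; 0; 0; 98; 98; 98; 0; 0; 0; 0; 98; 98;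 98; 0; 0; 0; 0; 98; 98; 98; 0; 112; 0; 0; 98; 98; 98; 0; 0; 0; 0; 98; 98; 98; 0; 0; 0; 0; 99; 99; 99; 0; 0; 0; 0; 99; 99; 99; 0; 0; 0; 0; 99; 99; 99; 0; 0; 113; 0; 99; 99; 99; 111; 0; 0; 0; 99; 99; 99; 0; 0; 0; 0; 99; 99; 99; 0; 113; 0; 0; 99; 99; 99; 0; 0; 0; 0; 100; 100; 100; 0; 0; 111; 0; 100; 100; 100; 0; 0; 0; 0; 100; 100; 100; 0; 0; 0; 0; 100; 100; 100; 0; 111; 0; 0; 100; 100; 100; 0; 0; 0; 0; 100; 100; 100; 0; 0; 0; 0; 101; 101; 101; 0; 0; 113; 0; 101; 101; 101; 0; 0; 0; 0; 101; 101; 101; 0; 0; 0; 0; 101; 101; 101; 0; 0; 0; 0; 101; 101; 101; 0; 113; 0; 0; 101; 101; 101; 0; 0; 0; 0; 101; 101; 101; 0; 0; 0; 0; 102; 102; 102; 0; 0; 0; 0; 102; 102; 102; 0; 0; 0; 0; 102; 102; 102; 0; 0; 0; 0; 102; 102; 102; 0; 0; 0; 0; 102; 102; 102; 0; 0; 0; 0; 102; 102; 102; 0; 0; 0; 0; 102; 102; 102; 0; 0; 0; 0; 102; 102; 102; 0; 0; 0; 0; 102; 102; 102; 0; 0; 0; 0; 103; 103; 103; 0; 0; 0; 0; 103; 103; 103; 0; 0; 0; 0; 103; 103; 103; 0; 0; 0; 0; 103; 103; 103; 0; 0; 0; 0; 103; 103; 103; 0; 0; 0; 0; 103; 103; 103;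 0; 0; 0; 0; 103; 103; 103; 0; 0; 0; 0; 103; 103; 103; 0; 0; 0; 0; 103; 103; 103; 0; 0; 0; 0; 103; 103; 103; 0; 0; 0; 0; 104; 104; 104; 0; 0; 0; 0; 104; 104; 104; 0; 0; 0; 0; 104; 104; 104; 0; 0; 0; 0; 104; 104; 104; 0; 0; 0; 0; 104; 104; 104; 0; 0; 0; 0; 104; 104; 104; 0; 0; 0; 0; 104; 104; 104; 0; 0; 0; 0; 104; 104; 104; 0; 0; 0; 0; 105; 105; 105; 0; 0; 0; 0; 105; 105; 105; 0; 0; 0; 0; 105; 105; 105; 0; 0; 0; 0; 105; 105; 105; 0; 0; 0; 0; 105; 105; 105; 0; 0; 0; 0; 105; 105; 105; 0; 0; 0; 0; 105; 105; 105; 0; 0; 0; 0; 105; 105; 105; 0; 0; 0; 0; 105; 105; 105; 0; 0; 0; 0; 106; 106; 106; 0; 0; 0; 0; 106; 106; 106; 0; 0; 0; 0; 106; 106; 106; 0; 0; 0; 0; 106; 106; 106; 0; 0; 0; 0; 106; 106; 106; 0; 0; 0; 0; 106; 106; 106; 0; 0; 0; 0; 106; 106; 106; 0; 0; 0; 0; 106; 106; 106; 0; 0; 0; 0; 106; 106; 106; 0; 0; 0; 0; 107; 107; 107; 0; 0; 0; 0; 107; 107; 107; 0; 0; 0; 0; 107; 107; 107; 0; 0; 0; 0; 107; 107; 107; 0; 0; 0; 0; 107; 107; 107; 0; 0; 0; 0; 107; 107; 107; 0; 0; 0; 0; 107; 107; 107; 0; 0; 0; 0; 107; 107; 107; 0;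 0; 0; 0; 108; 108; 108; 0; 0; 0; 0; 108; 108; 108; 0; 0; 0; 0; 108; 108; 108; 0; 0; 0; 0; 108; 108; 108; 0; 0; 0; 0; 108; 108; 108; 0; 0; 0; 0; 108; 108; 108; 0; 0; 0; 0; 108; 108; 108; 0; 0; 0; 0; 108; 108; 108; 0; 0; 0; 0; 108; 108; 108; 0; 0; 0; 0; 108; 108; 108; 0; 0; 0; 0; 109; 109; 109; 0; 0; 0; 0; 109; 109; 109; 0; 0; 0; 0; 109; 109; 109; 0; 0; 0; 0; 109; 109; 109; 0; 0; 0; 0; 109; 109; 109; 0; 0; 0; 0; 109; 109; 109; 0; 0; 0; 0; 109; 109; 109; 0; 0; 0; 0; 109; 109; 109; 0; 0; 0; 0; 109; 109; 109; 0; 0; 0; 0; 110; 110; 110; 0; 0; 0; 0; 110; 110; 110; 0; 0; 0; 0; 110; 110; 110; 0; 0; 0; 0; 110; 110; 110; 0; 0; 0; 0; 110; 110; 110; 0; 0; 0; 0; 110; 110; 110; 0; 0; 0; 0; 110; 110; 110; 0; 0; 0; 0; 110; 110; 110; 0; 0; 0; 0; 110; 110; 110; 0; 0; 0; 0; 111; 111; 111; 0; 0; 0; 0; 111; 111; 111; 0; 0; 0; 0; 111; 111; 111; 0; 0; 0; 0; 111; 111; 111; 0; 0; 0; 0; 111; 111; 111; 0; 0; 0; 0; 111; 111; 111; 0; 0; 0; 0; 111; 111; 111; 0; 0; 0; 0; 111; 111; 111; 0; 0; 0; 0; 112; 112; 112; 0; 0; 0; 0; 112; 112; 112; 0; 0;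 0; 0; 112; 112; 112; 0; 0; 0; 0; 112; 112; 112; 0; 0; 0; 0; 112; 112; 112; 0; 0; 0; 0; 112; 112; 112; 0; 0; 0; 0; 112; 112; 112; 0; 0; 0; 0; 112; 112; 112; 0; 0; 0; 0; 112; 112; 112; 0; 0; 0; 0; 112; 112; 112; 0; 0; 0; 0; 113; 113; 113; 0; 0; 0; 0; 113; 113; 113; 0; 0; 0; 0; 113; 113; 113; 0; 0; 0; 0; 113; 113; 113; 0; 0; 0; 0; 113; 113; 113; 0; 0; 0; 0; 113; 113; 113; 0; 0; 0; 0; 113; 113; 113; 0; 0; 0; 0; 113; 113; 113; 0; 0; 0; 0; 113; 113; 113; 0; 0; 0; 0].

Lemma closedL : closed_check Ldata Hints.
Proof. vm_compute. reflexivity. Qed.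
Lemma shapeL : shape_check Ldata.
Proof. vm_compute. reflexivity. Qed.
Lemma finalL : final_check Ldata.
Proof. vm_compute. reflexivity. Qed.
Lemma baseL : exists2 F0, F0 \in Ldata & fan_eq A3 (toF F0).
Proof.
exists (nth [::] Ldata 0); first by apply: mem_nth.
rewrite -toF_A3; apply: fan_eq3_sound; vm_compute; reflexivity.
Qed.

Lemma iso_refl F : fan_iso F F.
Proof.
exists 1%:M; first exact: unitmx1.
have -> : map (map (fun u : vec => u *m 1%:M)) F = F.
  by elim: F => //= s F ->; rewrite (eq_map (@mulmx1 _ _ _)) map_id.
exact: fan_eq_refl.
Qed.

Definition T12 : seq v3 := [:: (1,0,0); (0,1,0)].
Definition T123 : seq v3 := [:: (1,0,0); (0,1,0); (0,0,1)].
Definition T4 : seq v3 := [:: (1,1,0); (0,0,1)].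
Definition T5 : seq v3 := [:: (1,1,1); (0,0,1)].

Lemma part2 : forall G : fan, G \in [:: fan1; fan2; fan3; fan4; fan5] ->
  exists2 F : fan, reachable F /\ anticanonical_ample F & fan_iso F G.
Proof.
have r2 : reachable fan2.
  rewrite -toF_fan2 /fan2' -star_toF; apply: reach_star; first exact: reach_A3.
  by apply: (@face_sound A3' T12); vm_compute.
have r3 : reachable fan3.
  rewrite -toF_fan3 /fan3' -star_toF; apply: reach_star; first exact: reach_A3.
  by apply: (@face_sound A3' T123); vm_compute.
move=> G; rewrite !inE.
case/orP => [/eqP ->|].
  exists A3; last exact: iso_refl.
  by split; [exact: reach_A3 | rewrite -toF_A3; apply: amp_sound; vm_compute].
case/orP => [/eqP ->|].
  exists fan2; last exact: iso_refl.
  by split => //; rewrite -toF_fan2; apply: amp_sound; vm_compute.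
case/orP => [/eqP ->|].
  exists fan3; last exact: iso_refl.
  by split => //; rewrite -toF_fan3; apply: amp_sound; vm_compute.
case/orP => [/eqP ->|/eqP ->].
- exists (toF (star3 fan2' T4)).
    split; last by apply: amp_sound; vm_compute.
    rewrite -star_toF; apply: reach_star; first by rewrite toF_fan2.
    by apply: face_sound; vm_compute.
  exists 1%:M; first exact: unitmx1.
  have -> : forall F, map (map (fun u : vec => u *m 1%:M)) F = F.
    by elim=> //= s F ->; rewrite (eq_map (@mulmx1 _ _ _)) map_id.
  by rewrite -toF_fan4; apply: fan_eq3_sound; vm_compute.
- exists (toF (star3 fan3' T5)).
    split; last by apply: amp_sound; vm_compute.
    rewrite -star_toF; apply: reach_star; first by rewrite toF_fan3.
    by apply: face_sound; vm_compute.
  exists 1%:M; first exact: unitmx1.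
  have -> : forall F, map (map (fun u : vec => u *m 1%:M)) F = F.
    by elim=> //= s F ->; rewrite (eq_map (@mulmx1 _ _ _)) map_id.
  by rewrite -toF_fan5; apply: fan_eq3_sound; vm_compute.
Qed.

Lemma part1 : forall F : fan, reachable F -> anticanonical_ample F ->
     fan_iso F fan1 \/ fan_iso F fan2 \/ fan_iso F fan3 \/
     fan_iso F fan4 \/ fan_iso F fan5.
Proof.
move=> F rF A.
have [gF [[F0 F0L fe]|O]] := inv_main closedL shapeL baseL rF; last first.
  by case: (Obs_nonample gF O A).
have A0 := ample_feq fe A.
case: (final_sound (allP finalL F0 F0L) A0) => [h|[h|[h|[h|h]]]].
- by left; apply: fan_iso_feq fe h.
- by right; left; apply: fan_iso_feq fe h.
- by right; right; left; apply: fan_iso_feq fe h.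
- by right; right; right; left; apply: fan_iso_feq fe h.
- by right; right; right; right; apply: fan_iso_feq fe h.
Qed.

Theorem proposition4p1 :
  (forall F : fan, reachable F -> anticanonical_ample F ->
     fan_iso F fan1 \/ fan_iso F fan2 \/ fan_iso F fan3 \/
     fan_iso F fan4 \/ fan_iso F fan5) /\
  (forall G : fan, G \in [:: fan1; fan2; fan3; fan4; fan5] ->
     exists2 F : fan, reachable F /\ anticanonical_ample F & fan_iso F G).
Proof. exact: (conj part1 part2). Qed.
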